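(* Assume $H=0$ and that the Riccati equation $\dot K+K(A+G)+(A+G)^TK-\gamma K^2-\widehat Q=0$, $K(T)=-H$, has a unique solution on $[0,T]$. Let $\Phi(t,s)$ be the fundamental solution matrix of $\dot\varphi=(A+G-\gamma K(t))\varphi$ with $\Phi(s,s)=I$, and define $c_1=\max_{t\in[0,T]}|K(t)|$, $c_2=\max_{0\le t,s\le T}|\Phi(t,s)|$, $c_3=\max_{t\in[0,T]}\int_t^T|e^{A(s-t)}|\,s\,ds$, $c_4=\max_{t\in[0,T]}\int_t^T|e^{A(s-t)}|(Ts-\frac{s^2}{2})ds$. If $c_2\,|BR^{-1}B^T|\cdot|Q(I-\Gamma)|\,(c_3+\gamma c_1c_2c_4)<1$, then the system (MF) has a unique solution on $[0,T]$.
   Context: Fix integers $n,n_1\ge1$, $T>0$, constant matrices $A,G,\Gamma\in\mathbb R^{n\times n}$, $B\in\mathbb R^{n\times n_1}$, $\eta,m_0\in\mathbb R^n$, $\gamma>0$, symmetric $Q\ge0$, $H\ge0$ ($n\times n$), $R>0$ ($n_1\times n_1$). $|\cdot|$ is the Euclidean norm for vectors and the Frobenius norm for matrices; $\widehat Q=(I-\Gamma)^TQ(I-\Gamma)$. (MF) is the system $\dot{\mathbf m}=(A+G)\mathbf m+BR^{-1}B^T\mathbf y+\gamma\mathbf p$, $\dot{\mathbf p}=-(A+G)^T\mathbf p-(I-\Gamma)^TQ[\mathbf m-(\Gamma\mathbf m+\eta)]$, $\dot{\mathbf y}=-A^T\mathbf y+Q[\mathbf m-(\Gamma\mathbf m+\eta)]$,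 $\mathbf m(0)=m_0$, $\mathbf p(T)=H\mathbf m(T)$, $\mathbf y(T)=-H\mathbf m(T)$. *)

(* Defs.v *)
(* Vectors of R^n are functions nat -> R
   and n x m matrices are functions nat -> nat -> R; only the entries with
   indices < n (resp. < m) are meaningful, and all equalities are stated
   entrywise on that range. *)
From Stdlib Require Import Arith Reals Lra ClassicalEpsilon.
Open Scope R_scope.

Definition vec := nat -> R.
Definition mat := nat -> nat -> R.

Fixpoint rsum (n : nat) (f : nat -> R) : R :=
  match n with O => 0 | S k => rsum k f + f k end.

Definition madd (A B : mat) : mat := fun i j => A i j + B i j.
Definition msub (A B : mat) : mat := fun i j => A i j - B i j.
Definition mopp (A : mat) : mat := fun i j => - A i j.
Definition mscal (c : R) (A : mat) : mat := fun i j => c * A i j.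
Definition mtr (A : mat) : mat := fun i j => A j i.
Definition idm : mat := fun i j => if Nat.eqb i j then 1 else 0.
Definition mmul (p : nat) (A B : mat) : mat :=
  fun i j => rsum p (fun k => A i k * B k j).
Definition mvec (p : nat) (A : mat) (x : vec) : vec :=
  fun i => rsum p (fun k => A i k * x k).
Definition vadd (x y : vec) : vec := fun i => x i + y i.
Definition vsub (x y : vec) : vec := fun i => x i - y i.
Definition vopp (x : vec) : vec := fun i => - x i.
Definition vscal (c : R) (x : vec) : vec := fun i => c * x i.

Definition meq (n m : nat) (A B : mat) : Prop :=
  forall i j, (i < n)%nat -> (j < m)%nat -> A i j = B i j.
Definition veq (n : nat) (x y : vec) : Prop :=
  forall i, (i < n)%nat -> x i = y i.

Definition fnorm (n m : nat) (A : mat) : R :=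
  sqrt (rsum n (fun i => rsum m (fun j => A i j ^ 2))).

Definition symmetric (n : nat) (A : mat) : Prop := meq n n A (mtr A).
Definition psd (n : nat) (A : mat) : Prop :=
  symmetric n A /\ forall x : vec, 0 <= rsum n (fun i => x i * mvec n A x i).
Definition pd (n : nat) (A : mat) : Prop :=
  symmetric n A /\ forall x : vec, (exists i, (i < n)%nat /\ x i <> 0) ->
    0 < rsum n (fun i => x i * mvec n A x i).

Definition minv (n : nat) (M : mat) : mat :=
  epsilon (inhabits (fun _ _ => 0))
    (fun N => meq n n (mmul n M N) idm /\ meq n n (mmul n N M) idm).

Definition mpow (n : nat) (A : mat) (k : nat) : mat :=
  Nat.iter k (fun M => mmul n A M) idm.
Definition mexp (n : nat) (A : mat) (tau : R) : mat :=
  fun i j => epsilon (inhabits 0) (fun l =>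
    Un_cv (fun N => sum_f_R0 (fun k => mpow n A k i j * tau ^ k / INR (Factorial.fact k)) N) l).

Definition integral (f : R -> R) (a b : R) : R :=
  epsilon (inhabits 0) (fun v => exists pr : Riemann_integrable f a b, RiemannInt pr = v).

Definition has_deriv_on (a b : R) (f f' : R -> R) : Prop :=
  forall t, a <= t <= b -> forall eps, 0 < eps -> exists delta, 0 < delta /\
    forall h, h <> 0 -> Rabs h < delta -> a <= t + h <= b ->
      Rabs ((f (t + h) - f t) / h - f' t) < eps.

Definition is_max_on {X : Type} (P : X -> Prop) (f : X -> R) (c : R) : Prop :=
  (exists x, P x /\ f x = c) /\ (forall x, P x -> f x <= c).

(* K solves  K' + K(A+G) + (A+G)^T K - gamma K^2 - Qhat = 0 on [0,T], K(T) = -H *)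
Definition riccati_sol (n : nat) (T gamma : R) (A G Gam Q H : mat) (K : R -> mat) : Prop :=
  let AG := madd A G in
  let Qhat := mmul n (mmul n (mtr (msub idm Gam)) Q) (msub idm Gam) in
  (forall i j, (i < n)%nat -> (j < n)%nat ->
     has_deriv_on 0 T (fun t => K t i j)
       (fun t => (madd (mopp (madd (mmul n (K t) AG) (mmul n (mtr AG) (K t))))
                       (madd (mscal gamma (mmul n (K t) (K t))) Qhat)) i j)) /\
  meq n n (K T) (mopp H).

Definition fundamental_sol (n : nat) (T gamma : R) (A G : mat) (K : R -> mat)
  (Phi : R -> R -> mat) : Prop :=
  forall s, 0 <= s <= T ->
    meq n n (Phi s s) idm /\
    forall i j, (i < n)%nat -> (j < n)%nat ->
      has_deriv_on 0 T (fun t => Phi t s i j)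
        (fun t => mmul n (msub (madd A G) (mscal gamma (K t))) (Phi t s) i j).

Definition MF_sol (n n1 : nat) (T gamma : R) (A G Gam B Q H R0 : mat) (eta m0 : vec)
  (m p y : R -> vec) : Prop :=
  let AG := madd A G in
  let BRB := mmul n1 (mmul n1 B (minv n1 R0)) (mtr B) in
  let dev := fun t => vsub (m t) (vadd (mvec n Gam (m t)) eta) in
  (forall i, (i < n)%nat ->
     has_deriv_on 0 T (fun t => m t i)
       (fun t => (vadd (vadd (mvec n AG (m t)) (mvec n BRB (y t))) (vscal gamma (p t))) i)) /\
  (forall i, (i < n)%nat ->
     has_deriv_on 0 T (fun t => p t i)
       (fun t => (vsub (vopp (mvec n (mtr AG) (p t)))
                       (mvec n (mmul n (mtr (msub idm Gam)) Q) (dev t))) i)) /\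
  (forall i, (i < n)%nat ->
     has_deriv_on 0 T (fun t => y t i)
       (fun t => (vadd (vopp (mvec n (mtr A) (y t))) (mvec n Q (dev t))) i)) /\
  veq n (m 0) m0 /\
  veq n (p T) (mvec n H (m T)) /\
  veq n (y T) (vopp (mvec n H (m T))).

(* Main.v *)
Require Import Defs.
From Stdlib Require Import Reals Lra Lia Psatz Arith ClassicalEpsilon FunctionalExtensionality.
Open Scope R_scope.

Lemma rsum_ext n f g : (forall i, (i < n)%nat -> f i = g i) -> rsum n f = rsum n g.
Proof. induction n; simpl; intros H; auto. rewrite IHn by (intros; apply H; lia). rewrite H by lia. auto. Qed.

Lemma rsum_plus n f g : rsum n (fun i => f i + g i) = rsum n f + rsum n g.
Proof. induction n; simpl; [lra| rewrite IHn; lra]. Qed.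
Lemma rsum_minus n f g : rsum n (fun i => f i - g i) = rsum n f - rsum n g.
Proof. induction n; simpl; [lra| rewrite IHn; lra]. Qed.
Lemma rsum_opp n f : rsum n (fun i => - f i) = - rsum n f.
Proof. induction n; simpl; [lra| rewrite IHn; lra]. Qed.
Lemma rsum_scal n c f : rsum n (fun i => c * f i) = c * rsum n f.
Proof. induction n; simpl; [lra| rewrite IHn; lra]. Qed.
Lemma rsum_scal_r n c f : rsum n (fun i => f i * c) = rsum n f * c.
Proof. induction n; simpl; [lra| rewrite IHn; lra]. Qed.
Lemma rsum_0 n : rsum n (fun _ => 0) = 0.
Proof. induction n; simpl; [lra| rewrite IHn; lra]. Qed.
Lemma rsum_0' n f : (forall i, (i < n)%nat -> f i = 0) -> rsum n f = 0.
Proof. intros H. rewrite (rsum_ext n f (fun _ => 0)); auto using rsum_0. Qed.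
Lemma rsum_le n f g : (forall i, (i < n)%nat -> f i <= g i) -> rsum n f <= rsum n g.
Proof. induction n; simpl; intros H; [lra|]. assert (f n <= g n) by (apply H; lia).
  assert (rsum n f <= rsum n g) by (apply IHn; intros; apply H; lia). lra. Qed.
Lemma rsum_nonneg n f : (forall i, (i < n)%nat -> 0 <= f i) -> 0 <= rsum n f.
Proof. intros H. rewrite <- (rsum_0 n). apply rsum_le; auto. Qed.
Lemma rsum_abs n f : Rabs (rsum n f) <= rsum n (fun i => Rabs (f i)).
Proof. induction n; simpl. rewrite Rabs_R0; lra.
  eapply Rle_trans; [apply Rabs_triang|]. lra. Qed.
Lemma rsum_swap n m f : rsum n (fun i => rsum m (fun j => f i j)) = rsum m (fun j => rsum n (fun i => f i j)).
Proof. induction n; simpl. rewrite rsum_0; auto. rewrite IHn, <- rsum_plus. auto. Qed.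
Lemma rsum_split a b f : rsum (a + b) f = rsum a f + rsum b (fun k => f (a + k)%nat).
Proof. induction b; simpl. rewrite Nat.add_0_r; lra. rewrite Nat.add_succ_r. simpl. rewrite IHb. lra. Qed.
Lemma rsum_delta n i x : (i < n)%nat -> rsum n (fun k => idm i k * x k) = x i.
Proof. induction n; intros Hi; [lia|]. simpl.
  destruct (Nat.eq_dec i n).
  - subst. rewrite rsum_0'. unfold idm. rewrite Nat.eqb_refl. lra.
    intros k Hk. unfold idm. destruct (Nat.eqb_spec n k); [lia|lra].
  - rewrite IHn by lia. unfold idm. destruct (Nat.eqb_spec i n); [lia|lra].
Qed.
Lemma rsum_delta' n i x : (i < n)%nat -> rsum n (fun k => x k * idm k i) = x i.
Proof. intros Hi. rewrite <- (rsum_delta n i x Hi). apply rsum_ext. intros k _.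
  unfold idm. destruct (Nat.eqb_spec i k), (Nat.eqb_spec k i); subst; try lia; lra. Qed.
Lemma rsum_mono_n n f : (forall i, 0 <= f i) -> forall i, (i < n)%nat -> f i <= rsum n f.
Proof. induction n; intros H i Hi; [lia|]. simpl.
  assert (0 <= rsum n f) by (apply rsum_nonneg; auto).
  destruct (Nat.eq_dec i n). subst. lra. specialize (IHn H i ltac:(lia)). specialize (H n). lra. Qed.
Lemma rsum_mono_n' n f i : (forall k, (k < n)%nat -> 0 <= f k) -> (i < n)%nat -> f i <= rsum n f.
Proof. revert i. induction n; intros i H Hi; [lia|]. simpl.
  assert (0 <= rsum n f) by (apply rsum_nonneg; intros; apply H; lia).
  destruct (Nat.eq_dec i n). subst. lra.
  assert (f i <= rsum n f) by (apply IHn; [intros; apply H; lia| lia]). assert (0 <= f n) by (apply H; lia). lra. Qed.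

Definition skip (j0 j : nat) : nat := if Nat.ltb j j0 then j else S j.
Lemma rsum_skip m j0 f : (j0 <= m)%nat -> rsum (S m) f = f j0 + rsum m (fun j => f (skip j0 j)).
Proof. induction m; intros H.
  - assert (j0 = 0%nat) by lia. subst. simpl. lra.
  - destruct (Nat.eq_dec j0 (S m)).
    + subst. replace (rsum (S (S m)) f) with (rsum (S m) f + f (S m)) by reflexivity.
      replace (rsum (S m) (fun j => f (skip (S m) j))) with (rsum (S m) f). lra.
      apply rsum_ext. intros i Hi. unfold skip. destruct (Nat.ltb_spec i (S m)); [auto|lia].
    + replace (rsum (S (S m)) f) with (rsum (S m) f + f (S m)) by reflexivity.
      rewrite IHm by lia. simpl. replace (skip j0 m) with (S m) by (unfold skip; destruct (Nat.ltb_spec m j0); lia). lra.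
Qed.

Definition ip (n : nat) (u v : vec) : R := rsum n (fun i => u i * v i).
Definition vn (n : nat) (v : vec) : R := sqrt (ip n v v).

Lemma ip_sym n u v : ip n u v = ip n v u.
Proof. unfold ip. apply rsum_ext; intros; ring. Qed.
Lemma ip_nonneg n u : 0 <= ip n u u.
Proof. apply rsum_nonneg; intros; nra. Qed.
Lemma vn_nonneg n u : 0 <= vn n u.
Proof. apply sqrt_pos. Qed.
Lemma vn_sq n u : vn n u * vn n u = ip n u u.
Proof. apply sqrt_sqrt, ip_nonneg. Qed.

Lemma CS n u v : (ip n u v)^2 <= ip n u u * ip n v v.
Proof. unfold ip. induction n; simpl. lra.
  set (a := rsum n (fun i => u i * v i)) in *.
  set (b := rsum n (fun i => u i * u i)) in *.
  set (c := rsum n (fun i => v i * v i)) in *.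
  assert (0 <= b) by (apply rsum_nonneg; intros; nra).
  assert (0 <= c) by (apply rsum_nonneg; intros; nra).
  set (x := u n) in *. set (y := v n) in *.
  assert (K1: (b*y*y + c*x*x)^2 >= 4*(b*c)*(x*x*y*y)).
  { assert (0 <= (b*y*y - c*x*x)^2) by apply pow2_ge_0. nra. }
  assert (K2: 4*(b*c)*(x*x*y*y) >= 4 * a^2 *(x*x*y*y)).
  { assert (0 <= x*x*y*y) by nra. nra. }
  assert (K3: 0 <= b*y*y + c*x*x) by nra.
  assert (K4: 2*a*x*y <= b*y*y + c*x*x).
  { destruct (Rle_dec (2*a*x*y) 0). lra.
    apply Rnot_lt_le. intros Hc. assert ((b*y*y + c*x*x)^2 < (2*a*x*y)^2).
    { simpl; nra. } nra. }
  nra. Qed.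

Lemma CS' n u v : Rabs (ip n u v) <= vn n u * vn n v.
Proof. unfold vn. rewrite <- sqrt_mult by apply ip_nonneg.
  rewrite <- sqrt_Rsqr_abs. apply sqrt_le_1_alt. unfold Rsqr. pose proof (CS n u v). simpl in H. lra. Qed.

Lemma ip_le_vn n u v : ip n u v <= vn n u * vn n v.
Proof. pose proof (CS' n u v). pose proof (Rle_abs (ip n u v)). lra. Qed.

Lemma sqrt_le_lin x y : 0 <= y -> x <= y * y -> sqrt x <= y.
Proof. intros Hy H. destruct (Rle_dec x 0). rewrite sqrt_neg_0 by lra. auto.
  rewrite <- (sqrt_square y Hy). apply sqrt_le_1_alt. lra. Qed.

Lemma vn_le_of_sq n u c : 0 <= c -> ip n u u <= c * c -> vn n u <= c.
Proof. intros. apply sqrt_le_lin; auto. Qed.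

Lemma vn_zero n u : vn n u = 0 -> forall i, (i < n)%nat -> u i = 0.
Proof. intros H i Hi. pose proof (vn_sq n u). rewrite H in H0.
  assert (u i * u i <= ip n u u). { unfold ip. apply (rsum_mono_n' n (fun i => u i * u i)); auto. intros; nra. }
  nra. Qed.

Lemma comp_le_vn n u i : (i < n)%nat -> Rabs (u i) <= vn n u.
Proof. intros Hi. unfold vn. rewrite <- sqrt_Rsqr_abs. apply sqrt_le_1_alt. unfold Rsqr.
  unfold ip. apply (rsum_mono_n' n (fun i => u i * u i)); auto. intros; nra. Qed.

Lemma vn_le_sumabs n u : vn n u <= rsum n (fun i => Rabs (u i)).
Proof. apply vn_le_of_sq. apply rsum_nonneg; intros; apply Rabs_pos.
  unfold ip. induction n; simpl. lra.
  assert (0 <= rsum n (fun i => Rabs (u i))) by (apply rsum_nonneg; intros; apply Rabs_pos).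
  pose proof (Rabs_pos (u n)). assert (u n * u n = Rabs (u n) * Rabs (u n)).
  { rewrite <- Rabs_mult. rewrite Rabs_right; nra. } nra. Qed.

Lemma vn_triangle n u v : vn n (vadd u v) <= vn n u + vn n v.
Proof. apply vn_le_of_sq. pose proof (vn_nonneg n u); pose proof (vn_nonneg n v); lra.
  unfold vadd. assert (E: ip n (fun i => u i + v i) (fun i => u i + v i) = ip n u u + 2 * ip n u v + ip n v v).
  { unfold ip. rewrite <- rsum_scal. rewrite <- rsum_plus. rewrite <- rsum_plus. apply rsum_ext; intros; ring. }
  rewrite E. rewrite <- (vn_sq n u), <- (vn_sq n v). pose proof (ip_le_vn n u v). nra. Qed.

Lemma vn_opp n u : vn n (vopp u) = vn n u.
Proof. unfold vn, ip, vopp. f_equal. apply rsum_ext; intros; ring. Qed.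

Lemma vn_scal n c u : vn n (vscal c u) = Rabs c * vn n u.
Proof. unfold vn, vscal, ip. rewrite <- (sqrt_Rsqr_abs c), <- sqrt_mult by (try apply Rle_0_sqr; apply rsum_nonneg; intros; nra).
  f_equal. rewrite <- rsum_scal. apply rsum_ext; intros. unfold Rsqr; ring. Qed.

Lemma vn_ext n u v : veq n u v -> vn n u = vn n v.
Proof. intros H. unfold vn, ip. f_equal. apply rsum_ext; intros. rewrite H; auto. Qed.

Lemma vn_sub_diff n u v : Rabs (vn n u - vn n v) <= vn n (vsub u v).
Proof. assert (vn n u <= vn n (vsub u v) + vn n v).
  { replace (vn n u) with (vn n (vadd (vsub u v) v)). apply vn_triangle.
    apply vn_ext. intros i _. unfold vadd, vsub; ring. }
  assert (vn n v <= vn n (vsub u v) + vn n u).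
  { replace (vn n v) with (vn n (vadd (vopp (vsub u v)) u)). rewrite <- (vn_opp n (vsub u v)). apply vn_triangle.
    apply vn_ext. intros i _. unfold vadd, vsub, vopp; ring. }
  apply Rabs_le; lra. Qed.

Lemma fnorm_nonneg n m M : 0 <= fnorm n m M.
Proof. apply sqrt_pos. Qed.

Lemma mvec_bound n M x : vn n (mvec n M x) <= fnorm n n M * vn n x.
Proof. unfold vn, fnorm. rewrite <- sqrt_mult by (apply rsum_nonneg; intros; try apply rsum_nonneg; intros; nra).
  apply sqrt_le_1_alt. unfold ip. rewrite <- rsum_scal_r. apply rsum_le. intros i Hi.
  pose proof (CS n (M i) x). unfold ip in H. unfold mvec. simpl in H.
  replace (rsum n (fun j => M i j ^ 2)) with (rsum n (fun k => M i k * M i k)) by (apply rsum_ext; intros; ring). nra. Qed.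

Lemma fnorm_tr n M : fnorm n n (mtr M) = fnorm n n M.
Proof. unfold fnorm, mtr. f_equal. apply rsum_swap. Qed.

Lemma entry_le_fnorm n M i j : (i < n)%nat -> (j < n)%nat -> Rabs (M i j) <= fnorm n n M.
Proof. intros Hi Hj. unfold fnorm. rewrite <- sqrt_Rsqr_abs. apply sqrt_le_1_alt. unfold Rsqr.
  replace (M i j * M i j) with (M i j ^ 2) by ring.
  eapply Rle_trans; [| apply (rsum_mono_n' n (fun i => rsum n (fun j => M i j ^2)) i); auto].
  apply (rsum_mono_n' n (fun j => M i j ^ 2)) with (i := j); auto. intros; nra.
  intros; apply rsum_nonneg; intros; nra. Qed.

Lemma fnorm_ext n M N : meq n n M N -> fnorm n n M = fnorm n n N.
Proof. intros H. unfold fnorm. f_equal. apply rsum_ext; intros. apply rsum_ext; intros. rewrite H; auto. Qed.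

Lemma mvec_madd n A B x i : mvec n (madd A B) x i = mvec n A x i + mvec n B x i.
Proof. unfold mvec, madd. rewrite <- rsum_plus. apply rsum_ext; intros; ring. Qed.
Lemma mvec_msub n A B x i : mvec n (msub A B) x i = mvec n A x i - mvec n B x i.
Proof. unfold mvec, msub. rewrite <- rsum_minus. apply rsum_ext; intros; ring. Qed.
Lemma mvec_mopp n A x i : mvec n (mopp A) x i = - mvec n A x i.
Proof. unfold mvec, mopp. rewrite <- rsum_opp. apply rsum_ext; intros; ring. Qed.
Lemma mvec_mscal n c A x i : mvec n (mscal c A) x i = c * mvec n A x i.
Proof. unfold mvec, mscal. rewrite <- rsum_scal. apply rsum_ext; intros; ring. Qed.
Lemma mvec_vadd n A x y i : mvec n A (vadd x y) i = mvec n A x i + mvec n A y i.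
Proof. unfold mvec, vadd. rewrite <- rsum_plus. apply rsum_ext; intros; ring. Qed.
Lemma mvec_vsub n A x y i : mvec n A (vsub x y) i = mvec n A x i - mvec n A y i.
Proof. unfold mvec, vsub. rewrite <- rsum_minus. apply rsum_ext; intros; ring. Qed.
Lemma mvec_vopp n A x i : mvec n A (vopp x) i = - mvec n A x i.
Proof. unfold mvec, vopp. rewrite <- rsum_opp. apply rsum_ext; intros; ring. Qed.
Lemma mvec_vscal n A c x i : mvec n A (vscal c x) i = c * mvec n A x i.
Proof. unfold mvec, vscal. rewrite <- rsum_scal. apply rsum_ext; intros; ring. Qed.
Lemma mvec_mmul n A B x i : mvec n (mmul n A B) x i = mvec n A (mvec n B x) i.
Proof. unfold mvec, mmul. transitivity (rsum n (fun k => rsum n (fun l => A i l * B l k * x k))).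
  apply rsum_ext; intros. rewrite <- rsum_scal_r. auto.
  rewrite rsum_swap. apply rsum_ext; intros. rewrite <- rsum_scal. apply rsum_ext; intros; ring. Qed.
Lemma mvec_idm n x i : (i < n)%nat -> mvec n idm x i = x i.
Proof. intros. unfold mvec. apply rsum_delta; auto. Qed.
Lemma mvec_ext n A B x y i : (forall k, (k < n)%nat -> A i k = B i k) -> veq n x y -> mvec n A x i = mvec n B y i.
Proof. intros H1 H2. unfold mvec. apply rsum_ext; intros. rewrite H1, H2; auto. Qed.
Lemma ip_mvec n A u v : ip n (mvec n A u) v = ip n u (mvec n (mtr A) v).
Proof. unfold ip, mvec, mtr. transitivity (rsum n (fun i => rsum n (fun k => A i k * u k * v i))).
  apply rsum_ext; intros. rewrite <- rsum_scal_r; auto.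
  rewrite rsum_swap. apply rsum_ext; intros. rewrite <- rsum_scal. apply rsum_ext; intros; ring. Qed.
Lemma ip_ext n u u' v v' : veq n u u' -> veq n v v' -> ip n u v = ip n u' v'.
Proof. intros H1 H2. unfold ip. apply rsum_ext; intros. rewrite H1, H2; auto. Qed.
Lemma ip_vadd_r n u v w : ip n u (vadd v w) = ip n u v + ip n u w.
Proof. unfold ip, vadd. rewrite <- rsum_plus. apply rsum_ext; intros; ring. Qed.
Lemma ip_vsub_r n u v w : ip n u (vsub v w) = ip n u v - ip n u w.
Proof. unfold ip, vsub. rewrite <- rsum_minus. apply rsum_ext; intros; ring. Qed.
Lemma ip_vsub_l n u v w : ip n (vsub v w) u = ip n v u - ip n w u.
Proof. unfold ip, vsub. rewrite <- rsum_minus. apply rsum_ext; intros; ring. Qed.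

From Stdlib Require Import Reals Lra Lia Psatz Arith Classical.
Open Scope R_scope.

Definition lim0 (a b t : R) (F : R -> R) (L : R) : Prop :=
  forall eps, 0 < eps -> exists delta, 0 < delta /\
    forall h, h <> 0 -> Rabs h < delta -> a <= t + h <= b -> Rabs (F h - L) < eps.

Lemma D_lim a b f f' t : has_deriv_on a b f f' -> a <= t <= b ->
  lim0 a b t (fun h => (f (t + h) - f t) / h) (f' t).
Proof. intros H Ht. exact (H t Ht). Qed.

Lemma lim0_const a b t L : lim0 a b t (fun _ => L) L.
Proof. intros e He. exists 1. split; [lra|]. intros. rewrite Rminus_diag, Rabs_R0; lra. Qed.

Lemma lim0_ext a b t F G L : (forall h, h <> 0 -> a <= t + h <= b -> F h = G h) -> lim0 a b t F L -> lim0 a b t G L.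
Proof. intros E H e He. destruct (H e He) as [d [Hd Hh]]. exists d; split; auto. intros. rewrite <- E; auto. Qed.

Lemma lim0_ext_L a b t F L L' : L = L' -> lim0 a b t F L -> lim0 a b t F L'.
Proof. intros; subst; auto. Qed.

Lemma lim0_plus a b t F G L M : lim0 a b t F L -> lim0 a b t G M -> lim0 a b t (fun h => F h + G h) (L + M).
Proof. intros H1 H2 e He. destruct (H1 (e/2)) as [d1 [Hd1 P1]]; [lra|]. destruct (H2 (e/2)) as [d2 [Hd2 P2]]; [lra|].
  exists (Rmin d1 d2). split. apply Rmin_pos; auto. intros h Hh Hd Hab.
  assert (Rabs h < d1) by (eapply Rlt_le_trans; [apply Hd| apply Rmin_l]).
  assert (Rabs h < d2) by (eapply Rlt_le_trans; [apply Hd| apply Rmin_r]).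
  specialize (P1 h Hh H Hab). specialize (P2 h Hh H0 Hab).
  replace (F h + G h - (L + M)) with ((F h - L) + (G h - M)) by ring.
  eapply Rle_lt_trans; [apply Rabs_triang|]. lra. Qed.

Lemma lim0_scal a b t c F L : lim0 a b t F L -> lim0 a b t (fun h => c * F h) (c * L).
Proof. intros H e He. destruct (H (e / (Rabs c + 1))) as [d [Hd P]].
  apply Rdiv_lt_0_compat; auto. pose proof (Rabs_pos c); lra.
  exists d; split; auto. intros h Hh Hd' Hab. specialize (P h Hh Hd' Hab).
  replace (c * F h - c * L) with (c * (F h - L)) by ring. rewrite Rabs_mult.
  pose proof (Rabs_pos c). pose proof (Rabs_pos (F h - L)).
  apply Rlt_le_trans with ((Rabs c + 1) * (e / (Rabs c + 1))).
  apply Rle_lt_trans with (Rabs c * (e / (Rabs c + 1))). apply Rmult_le_compat_l; lra.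
  assert (0 < e / (Rabs c + 1)) by (apply Rdiv_lt_0_compat; lra). nra.
  right. field. lra. Qed.

Lemma lim0_opp a b t F L : lim0 a b t F L -> lim0 a b t (fun h => - F h) (- L).
Proof. intros H. eapply lim0_ext_L; [|eapply lim0_ext; [|apply (lim0_scal _ _ _ (-1) _ _ H)]].
  ring. intros; simpl; ring. Qed.

Lemma lim0_minus a b t F G L M : lim0 a b t F L -> lim0 a b t G M -> lim0 a b t (fun h => F h - G h) (L - M).
Proof. intros H1 H2. apply lim0_plus; auto. apply lim0_opp; auto. Qed.

Lemma lim0_bounded a b t F L : lim0 a b t F L -> exists d, 0 < d /\ forall h, h <> 0 -> Rabs h < d -> a <= t + h <= b -> Rabs (F h) <= Rabs L + 1.
Proof. intros H. destruct (H 1) as [d [Hd P]]; [lra|]. exists d; split; auto. intros h Hh Hd' Hab.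
  specialize (P h Hh Hd' Hab). pose proof (Rabs_triang_inv (F h) L). lra. Qed.

Lemma lim0_bound0 a b t F G : (forall h, h <> 0 -> a <= t + h <= b -> Rabs (F h) <= G h) -> lim0 a b t G 0 -> lim0 a b t F 0.
Proof. intros B H e He. destruct (H e He) as [d [Hd P]]. exists d; split; auto. intros h Hh Hd' Hab.
  specialize (P h Hh Hd' Hab). specialize (B h Hh Hab). rewrite Rminus_0_r in *.
  pose proof (Rle_abs (G h)). lra. Qed.

Lemma lim0_mult a b t F G L M : lim0 a b t F L -> lim0 a b t G M -> lim0 a b t (fun h => F h * G h) (L * M).
Proof. intros H1 H2.
  destruct (lim0_bounded _ _ _ _ _ H2) as [d0 [Hd0 B]].
  assert (Z1: lim0 a b t (fun h => F h - L) 0). { eapply lim0_ext_L; [|apply lim0_minus; [apply H1|apply lim0_const]]. ring. }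
  assert (Z2: lim0 a b t (fun h => G h - M) 0). { eapply lim0_ext_L; [|apply lim0_minus; [apply H2|apply lim0_const]]. ring. }
  assert (Z: lim0 a b t (fun h => F h * G h - L * M) 0).
  { intros e He. 
    destruct (Z1 (e / (2 * (Rabs M + 1)))) as [d1 [Hd1 P1]]. apply Rdiv_lt_0_compat; [lra|]. pose proof (Rabs_pos M); lra.
    destruct (Z2 (e / (2 * (Rabs L + 1)))) as [d2 [Hd2 P2]]. apply Rdiv_lt_0_compat; [lra|]. pose proof (Rabs_pos L); lra.
    exists (Rmin d0 (Rmin d1 d2)). split. repeat apply Rmin_pos; auto.
    intros h Hh Hd Hab.
    assert (Rabs h < d0) by (eapply Rlt_le_trans; [apply Hd| apply Rmin_l]).
    assert (Rabs h < d1) by (eapply Rlt_le_trans; [apply Hd| eapply Rle_trans; [apply Rmin_r| apply Rmin_l]]).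
    assert (Rabs h < d2) by (eapply Rlt_le_trans; [apply Hd| eapply Rle_trans; [apply Rmin_r| apply Rmin_r]]).
    specialize (B h Hh H Hab). specialize (P1 h Hh H0 Hab). specialize (P2 h Hh H3 Hab).
    rewrite Rminus_0_r in P1, P2.
    replace (F h * G h - L * M - 0) with ((F h - L) * G h + L * (G h - M)) by ring.
    eapply Rle_lt_trans; [apply Rabs_triang|]. rewrite !Rabs_mult.
    pose proof (Rabs_pos L); pose proof (Rabs_pos M); pose proof (Rabs_pos (G h)); pose proof (Rabs_pos (F h - L)); pose proof (Rabs_pos (G h - M)).
    assert (Rabs (F h - L) * Rabs (G h) <= e / (2 * (Rabs M + 1)) * (Rabs M + 1)) by (apply Rmult_le_compat; lra).
    assert (Rabs L * Rabs (G h - M) <= (Rabs L + 1) * (e / (2 * (Rabs L + 1)))) by (apply Rmult_le_compat; lra).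
    replace (e / (2 * (Rabs M + 1)) * (Rabs M + 1)) with (e/2) in * by (field; lra).
    replace ((Rabs L + 1) * (e / (2 * (Rabs L + 1)))) with (e/2) in * by (field; lra).
    assert (Rabs (F h - L) * Rabs (G h) < e / 2 \/ Rabs (F h - L) * Rabs (G h) <= e/2) by lra.
    destruct (Req_dec (Rabs (G h)) 0) as [E0|E0].
    { rewrite E0, Rmult_0_r. lra. }
    assert (Rabs (F h - L) * Rabs (G h) < e / (2 * (Rabs M + 1)) * (Rabs M + 1)).
    { apply Rlt_le_trans with (e / (2 * (Rabs M + 1)) * Rabs (G h)). apply Rmult_lt_compat_r; lra.
      apply Rmult_le_compat_l; [|lra]. left; apply Rdiv_lt_0_compat; lra. }
    replace (e / (2 * (Rabs M + 1)) * (Rabs M + 1)) with (e/2) in * by (field; lra). lra. }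
  intros e He. destruct (Z e He) as [d [Hd P]]. exists d; split; auto. intros. specialize (P h H H0 H3). rewrite Rminus_0_r in P. auto.
Qed.

Lemma lim0_rsum a b t n F L : (forall i, (i < n)%nat -> lim0 a b t (F i) (L i)) ->
  lim0 a b t (fun h => rsum n (fun i => F i h)) (rsum n L).
Proof. induction n; intros H; simpl. apply lim0_const.
  apply lim0_plus. apply IHn; intros; apply H; lia. apply H; lia. Qed.

Lemma lim0_to0 a b t F L : lim0 a b t F L -> lim0 a b t (fun h => F h - L) 0.
Proof. intros H. eapply lim0_ext_L; [|apply lim0_minus; [apply H|apply lim0_const]]. ring. Qed.

Lemma lim0_from0 a b t F L : lim0 a b t (fun h => F h - L) 0 -> lim0 a b t F L.
Proof. intros H. eapply lim0_ext_L; [|eapply lim0_ext; [|apply lim0_plus; [apply H|apply (lim0_const _ _ _ L)]]].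
  ring. intros; simpl; ring. Qed.

Lemma lim0_id0 a b t : lim0 a b t (fun h => h) 0.
Proof. intros e He. exists e. split; auto. intros. rewrite Rminus_0_r; auto. Qed.

Definition contw (a b : R) (f : R -> R) (t : R) : Prop := lim0 a b t (fun h => f (t + h)) (f t).

Lemma D_cont a b f f' t : has_deriv_on a b f f' -> a <= t <= b -> contw a b f t.
Proof. intros H Ht. apply lim0_from0.
  eapply lim0_ext_L; [|eapply lim0_ext; [| apply (lim0_mult _ _ _ _ _ _ _ (H t Ht) (lim0_id0 a b t))]].
  ring. intros h Hh _. simpl. field; auto. Qed.

Section Deriv.
Variables a b : R.

Lemma D_ext f f' g' : (forall t, a <= t <= b -> f' t = g' t) -> has_deriv_on a b f f' -> has_deriv_on a b f g'.
Proof. intros E H t Ht. rewrite <- E; auto. Qed.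

Lemma D_ext_f f g f' : (forall t, a <= t <= b -> f t = g t) -> has_deriv_on a b f f' -> has_deriv_on a b g f'.
Proof. intros E H t Ht. change (lim0 a b t (fun h => (g (t + h) - g t) / h) (f' t)).
  eapply lim0_ext; [|apply (D_lim _ _ _ _ t H Ht)]. intros h Hh Hab. simpl. rewrite !E; auto. Qed.

Lemma D_const c : has_deriv_on a b (fun _ => c) (fun _ => 0).
Proof. intros t Ht. eapply lim0_ext; [|apply lim0_const]. intros; simpl. field; auto. Qed.

Lemma D_id : has_deriv_on a b (fun t => t) (fun _ => 1).
Proof. intros t Ht. eapply lim0_ext; [|apply lim0_const]. intros; simpl. field; auto. Qed.

Lemma D_plus f f' g g' : has_deriv_on a b f f' -> has_deriv_on a b g g' ->
  has_deriv_on a b (fun t => f t + g t) (fun t => f' t + g' t).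
Proof. intros H1 H2 t Ht. eapply lim0_ext; [|apply (lim0_plus _ _ _ _ _ _ _ (H1 t Ht) (H2 t Ht))].
  intros; simpl. field; auto. Qed.

Lemma D_scal c f f' : has_deriv_on a b f f' -> has_deriv_on a b (fun t => c * f t) (fun t => c * f' t).
Proof. intros H1 t Ht. eapply lim0_ext; [|apply (lim0_scal _ _ _ c _ _ (H1 t Ht))].
  intros; simpl. field; auto. Qed.

Lemma D_opp f f' : has_deriv_on a b f f' -> has_deriv_on a b (fun t => - f t) (fun t => - f' t).
Proof. intros H. eapply D_ext_f; [|eapply D_ext; [|apply (D_scal (-1) _ _ H)]]; intros; simpl; ring. Qed.

Lemma D_minus f f' g g' : has_deriv_on a b f f' -> has_deriv_on a b g g' ->
  has_deriv_on a b (fun t => f t - g t) (fun t => f' t - g' t).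
Proof. intros H1 H2. apply D_plus; auto. apply D_opp; auto. Qed.

Lemma D_mult f f' g g' : has_deriv_on a b f f' -> has_deriv_on a b g g' ->
  has_deriv_on a b (fun t => f t * g t) (fun t => f' t * g t + f t * g' t).
Proof. intros H1 H2 t Ht.
  pose proof (D_cont _ _ _ _ _ H2 Ht) as C2.
  eapply lim0_ext; [|apply lim0_plus; [apply (lim0_mult _ _ _ _ _ _ _ (H1 t Ht) C2)| apply (lim0_scal _ _ _ (f t) _ _ (H2 t Ht))]].
  intros; simpl. field; auto. Qed.

Lemma D_rsum n F F' : (forall i, (i < n)%nat -> has_deriv_on a b (F i) (F' i)) ->
  has_deriv_on a b (fun t => rsum n (fun i => F i t)) (fun t => rsum n (fun i => F' i t)).
Proof. intros H t Ht. eapply lim0_ext; [|apply (lim0_rsum _ _ _ n (fun i h => (F i (t + h) - F i t) / h))].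
  intros h Hh _. simpl. unfold Rdiv. rewrite <- rsum_minus. rewrite <- rsum_scal_r. apply rsum_ext; intros; ring.
  intros i Hi. apply (D_lim _ _ _ _ t (H i Hi) Ht). Qed.

Lemma D_sub f f' a' b' : has_deriv_on a b f f' -> a <= a' -> b' <= b -> has_deriv_on a' b' f f'.
Proof. intros H H1 H2 t Ht e He. destruct (H t ltac:(lra) e He) as [d [Hd P]]. exists d; split; auto.
  intros. apply P; auto; lra. Qed.

Lemma D_exp c : has_deriv_on a b (fun t => exp (c * t)) (fun t => c * exp (c * t)).
Proof. intros t Ht e He.
  assert (Dl : derivable_pt_lim (fun t => exp (c * t)) t (c * exp (c * t))).
  { replace (c * exp (c * t)) with (exp (c * t) * (c * 1 + 0 * t)) by ring.
    apply (derivable_pt_lim_comp (fun t => c * t) exp).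
    intros e' He'. exists (mkposreal 1 Rlt_0_1). intros h Hh _.
    replace ((c * (t + h) - c * t) / h - (c * 1 + 0 * t)) with 0 by (field; auto). rewrite Rabs_R0; auto.
    apply derivable_pt_lim_exp. }
  destruct (Dl e He) as [d P]. exists d. split; [apply cond_pos|]. intros. apply P; auto. Qed.

End Deriv.

Lemma mono_core a b f f' x y e : has_deriv_on a b f f' -> (forall t, a <= t <= b -> f' t <= 0) ->
  a <= x -> x <= y -> y <= b -> 0 < e -> f y <= f x + e * (y - x).
Proof. intros Hd Hn Hax Hxy Hyb He.
  set (P := fun z => x <= z <= y /\ forall w, x <= w <= z -> f w <= f x + e * (w - x)).
  assert (Pb : bound P). { exists y. intros z [Hz _]. lra. }
  assert (Px : exists z, P z). { exists x. split. lra. intros w Hw. assert (w = x) by lra. subst. lra. }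
  destruct (completeness P Pb Px) as [c [Hub Hlub]].
  assert (Hxc : x <= c). { apply Hub. split; [lra|]. intros w Hw. assert (w = x) by lra. subst. lra. }
  assert (Hcy : c <= y). { apply Hlub. intros z [Hz _]. lra. }
  assert (C1 : forall w, x <= w < c -> f w <= f x + e * (w - x)).
  { intros w Hw. destruct (classic (exists z, P z /\ w < z)) as [[z [[Hz1 Hz2] Hwz]]|Hno].
    apply Hz2; lra. exfalso. assert (c <= w). apply Hlub. intros z Pz. apply Rnot_lt_le. intros Hlt. apply Hno. eauto. lra. }
  assert (C2 : f c <= f x + e * (c - x)).
  { destruct (Req_dec c x). subst. lra.
    apply Rnot_lt_le. intros Hlt. set (d := f c - f x - e * (c - x)).
    destruct (D_cont a b f f' c Hd ltac:(lra) (d/2) ltac:(unfold d; lra)) as [dl [Hdl P0]].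
    set (h := - Rmin (dl/2) ((c - x)/2)).
    assert (Hm1 : 0 < Rmin (dl/2) ((c - x)/2)) by (apply Rmin_pos; lra).
    assert (Hm2 : Rmin (dl/2) ((c - x)/2) <= dl/2) by apply Rmin_l.
    assert (Hm3 : Rmin (dl/2) ((c - x)/2) <= (c-x)/2) by apply Rmin_r.
    assert (Q := P0 h ltac:(unfold h; lra) ltac:(unfold h; rewrite Rabs_Ropp, Rabs_right; lra) ltac:(unfold h; lra)).
    assert (Q2 := C1 (c + h) ltac:(unfold h; lra)).
    assert (e * h <= 0) by (unfold h; nra).
    apply Rabs_def2 in Q. unfold d in Q. clearbody h. lra. }
  destruct (Req_dec c y) as [Ec|Nc]. subst c. auto.
  exfalso.
  destruct (Hd c ltac:(lra) e He) as [dl [Hdl P0]].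
  set (h0 := Rmin (dl/2) ((y - c)/2)).
  assert (Hm1 : 0 < h0) by (apply Rmin_pos; lra).
  assert (Hm2 : h0 <= dl/2) by apply Rmin_l.
  assert (Hm3 : h0 <= (y-c)/2) by apply Rmin_r.
  assert (P (c + h0)).
  { split. lra. intros w Hw. destruct (Rlt_le_dec w c). apply C1; lra.
    destruct (Req_dec w c). subst; auto.
    specialize (P0 (w - c) ltac:(lra) ltac:(rewrite Rabs_right; lra) ltac:(lra)).
    replace (c + (w - c)) with w in P0 by ring. specialize (Hn c ltac:(lra)).
    apply Rabs_def2 in P0. destruct P0 as [P0 _].
    assert (Hq : (f w - f c) / (w - c) < e) by lra.
    assert (f w - f c < e * (w - c)). { apply (Rmult_lt_compat_r (w - c)) in Hq; [|lra].
      unfold Rdiv in Hq. rewrite Rmult_assoc, Rinv_l in Hq by lra. lra. }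
    lra. }
  match goal with Hp : P (c + h0) |- _ => specialize (Hub _ Hp) end. lra.
Qed.

Lemma mono a b f f' x y : has_deriv_on a b f f' -> (forall t, a <= t <= b -> f' t <= 0) ->
  a <= x -> x <= y -> y <= b -> f y <= f x.
Proof. intros. apply le_epsilon. intros e He.
  destruct (Req_dec x y). subst; lra.
  pose proof (mono_core a b f f' x y (e / (y - x)) H H0 H1 H2 H3 ltac:(apply Rdiv_lt_0_compat; lra)) as Hc.
  replace (e / (y - x) * (y - x)) with e in Hc by (field; lra). lra. Qed.

Lemma mvi a b f f' B bb x y : has_deriv_on a b f f' -> has_deriv_on a b B bb ->
  (forall t, a <= t <= b -> Rabs (f' t) <= bb t) ->
  a <= x -> x <= y -> y <= b -> Rabs (f y - f x) <= B y - B x.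
Proof. intros H1 H2 Hb Hax Hxy Hyb.
  assert (f y - B y <= f x - B x).
  { apply (mono a b (fun t => f t - B t) (fun t => f' t - bb t)); auto. apply D_minus; auto.
    intros t Ht. specialize (Hb t Ht). pose proof (Rle_abs (f' t)). lra. }
  assert (- f y - B y <= - f x - B x).
  { apply (mono a b (fun t => - f t - B t) (fun t => - f' t - bb t)); auto. apply D_minus; auto. apply D_opp; auto.
    intros t Ht. specialize (Hb t Ht). pose proof (Rle_abs (- f' t)). rewrite Rabs_Ropp in H0. lra. }
  apply Rabs_le; lra. Qed.

Lemma max_on a b g : a <= b -> (forall t, a <= t <= b -> contw a b g t) ->
  exists x0, a <= x0 <= b /\ forall t, a <= t <= b -> g t <= g x0.
Proof. intros Hab Hc.
  set (cl := fun x => Rmax a (Rmin b x)).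
  assert (Hcl : forall x, a <= cl x <= b). { intros. unfold cl. unfold Rmax, Rmin.
    destruct (Rle_dec b x); destruct (Rle_dec a _); lra. }
  assert (Hcl2 : forall x, a <= x <= b -> cl x = x). { intros. unfold cl, Rmax, Rmin.
    destruct (Rle_dec b x); destruct (Rle_dec a _); lra. }
  assert (Hcl3 : forall x c, a <= c <= b -> Rabs (cl x - c) <= Rabs (x - c)).
  { intros. unfold cl, Rmax, Rmin. destruct (Rle_dec b x); destruct (Rle_dec a _);
    unfold Rabs; repeat destruct Rcase_abs; lra. }
  destruct (continuity_ab_maj (fun x => g (cl x)) a b Hab) as [M [HM1 HM2]].
  { intros c Hc0. unfold continuity_pt, continue_in, limit1_in, limit_in. simpl. unfold R_dist.
    intros e He. destruct (Hc c Hc0 e He) as [d [Hd P]]. exists d. split; auto.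
    intros x [_ Hx]. rewrite (Hcl2 c Hc0).
    destruct (Req_dec (cl x) c). rewrite H, Rminus_diag, Rabs_R0; auto.
    specialize (P (cl x - c) ltac:(lra)).
    replace (c + (cl x - c)) with (cl x) in P by ring. apply P.
    eapply Rle_lt_trans; [apply Hcl3; auto| auto]. apply Hcl. }
  exists (cl M). split. apply Hcl. intros t Ht. rewrite <- (Hcl2 t Ht). apply HM1. auto. Qed.

Definition Dv (n : nat) (a b : R) (f f' : R -> vec) : Prop :=
  forall i, (i < n)%nat -> has_deriv_on a b (fun t => f t i) (fun t => f' t i).

Lemma D_ip_const a b n w q q' : Dv n a b q q' ->
  has_deriv_on a b (fun t => ip n w (q t)) (fun t => ip n w (q' t)).
Proof. intros H. unfold ip. apply (D_rsum a b n (fun i t => w i * q t i) (fun i t => w i * q' t i)).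
  intros i Hi. apply D_scal. apply H; auto. Qed.

Lemma D_ip a b n u u' v v' : Dv n a b u u' -> Dv n a b v v' ->
  has_deriv_on a b (fun t => ip n (u t) (v t)) (fun t => ip n (u' t) (v t) + ip n (u t) (v' t)).
Proof. intros H1 H2. unfold ip.
  eapply D_ext; [|apply (D_rsum a b n (fun i t => u t i * v t i) (fun i t => u' t i * v t i + u t i * v' t i))].
  intros; simpl. rewrite rsum_plus. auto.
  intros i Hi. apply D_mult; auto. Qed.

Lemma B_nondec a b B bb x y : has_deriv_on a b B bb -> (forall t, a <= t <= b -> 0 <= bb t) ->
  a <= x -> x <= y -> y <= b -> B x <= B y.
Proof. intros. assert (- B y <= - B x). apply (mono a b (fun t => - B t) (fun t => - bb t)); auto.
  apply D_opp; auto. intros t Ht. specialize (H0 t Ht). lra. lra. Qed.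

Lemma mvi_vec a b n q q' B bb x y : Dv n a b q q' -> has_deriv_on a b B bb ->
  (forall t, a <= t <= b -> vn n (q' t) <= bb t) ->
  a <= x -> x <= y -> y <= b -> vn n (vsub (q y) (q x)) <= B y - B x.
Proof. intros H1 H2 Hb Hax Hxy Hyb.
  set (w := vsub (q y) (q x)).
  assert (Hnd : B x <= B y). { apply (B_nondec a b B bb); auto. intros t Ht. specialize (Hb t Ht). pose proof (vn_nonneg n (q' t)). lra. }
  assert (Hm : ip n w (q y) - vn n w * B y <= ip n w (q x) - vn n w * B x).
  { apply (mono a b (fun t => ip n w (q t) - vn n w * B t) (fun t => ip n w (q' t) - vn n w * bb t)); auto.
    apply D_minus. apply D_ip_const; auto. apply D_scal; auto.
    intros t Ht. pose proof (ip_le_vn n w (q' t)). specialize (Hb t Ht). pose proof (vn_nonneg n w).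
    assert (vn n w * vn n (q' t) <= vn n w * bb t) by (apply Rmult_le_compat_l; auto). lra. }
  assert (E : ip n w (q y) - ip n w (q x) = vn n w * vn n w).
  { rewrite vn_sq. unfold w. rewrite <- ip_vsub_r. auto. }
  pose proof (vn_nonneg n w).
  destruct (Req_dec (vn n w) 0). rewrite H0. lra.
  assert (vn n w * vn n w <= vn n w * (B y - B x)) by lra.
  apply Rmult_le_reg_l with (vn n w); lra. Qed.

From Stdlib Require Import Reals Lra Lia Psatz Arith Classical ClassicalEpsilon.
From Coquelicot Require Import Coquelicot.
Open Scope R_scope.

Definition mbeta (N : nat) (B : mat) : R := rsum N (fun i => rsum N (fun l => Rabs (B i l))) + 1.

Lemma mbeta_ge1 N B : 1 <= mbeta N B.
Proof. unfold mbeta. assert (0 <= rsum N (fun i => rsum N (fun l => Rabs (B i l)))).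
  apply rsum_nonneg; intros; apply rsum_nonneg; intros; apply Rabs_pos. lra. Qed.

Lemma mpow_S N B k i j : mpow N B (S k) i j = rsum N (fun l => B i l * mpow N B k l j).
Proof. reflexivity. Qed.

Lemma mpow_bound N B k i j : (i < N)%nat -> Rabs (mpow N B k i j) <= mbeta N B ^ k.
Proof. revert i j. induction k; intros i j Hi.
  - simpl. unfold idm. destruct (Nat.eqb i j); rewrite ?Rabs_R1, ?Rabs_R0; lra.
  - rewrite mpow_S. eapply Rle_trans; [apply rsum_abs|].
    apply Rle_trans with (rsum N (fun l => Rabs (B i l)) * mbeta N B ^ k).
    rewrite <- rsum_scal_r. apply rsum_le. intros l Hl. rewrite Rabs_mult.
    apply Rmult_le_compat_l. apply Rabs_pos. apply IHk; auto.
    simpl. apply Rmult_le_compat_r. apply pow_le. pose proof (mbeta_ge1 N B); lra.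
    unfold mbeta. pose proof (rsum_mono_n' N (fun i => rsum N (fun l => Rabs (B i l))) i).
    assert (0 <= 1) by lra. apply Rle_trans with (rsum N (fun i => rsum N (fun l => Rabs (B i l)))); [|lra].
    apply H; auto. intros; apply rsum_nonneg; intros; apply Rabs_pos. Qed.

Definition mco (N : nat) (B : mat) (i j : nat) (k : nat) : R := mpow N B k i j / INR (Factorial.fact k).

Lemma sum_ge_term f k : (forall m, 0 <= f m) -> f k <= sum_f_R0 f k.
Proof. intros H. destruct k. simpl; lra. simpl.
  assert (0 <= sum_f_R0 f k). { induction k; simpl. apply H. specialize (H (S k)). lra. }
  lra. Qed.

Lemma fact_pos k : 0 < INR (Factorial.fact k).
Proof. apply lt_0_INR. apply Factorial.lt_O_fact. Qed.

Lemma mco_radius N B i j x : (i < N)%nat -> Rbar_lt (Rabs x) (CV_radius (mco N B i j)).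
Proof. intros Hi. set (r := Rabs x + 1).
  assert (Hr : 0 <= r) by (unfold r; pose proof (Rabs_pos x); lra).
  assert (S : exists M, forall k, Rabs (mco N B i j k * r ^ k) <= M).
  { exists (exp (mbeta N B * r)). intros k.
    pose proof (mbeta_ge1 N B).
    apply Rle_trans with ((mbeta N B * r) ^ k / INR (Factorial.fact k)).
    unfold mco. rewrite Rabs_mult. unfold Rdiv. rewrite Rabs_mult. rewrite (Rabs_right (/ _)).
    2: { left. apply Rinv_0_lt_compat, fact_pos. }
    rewrite Rpow_mult_distr. rewrite (Rabs_right (r ^ k)) by (apply Rle_ge, pow_le; auto).
    pose proof (mpow_bound N B k i j Hi). pose proof (fact_pos k).
    assert (0 < / INR (Factorial.fact k)) by (apply Rinv_0_lt_compat; auto).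
    assert (0 <= r ^ k) by (apply pow_le; auto).
    apply Rle_trans with (mbeta N B ^ k * / INR (Factorial.fact k) * r ^ k).
    apply Rmult_le_compat_r; auto. apply Rmult_le_compat_r; lra. right; ring.
    eapply Rle_trans; [| apply (exp_ge_taylor (mbeta N B * r) k)].
    apply (sum_ge_term (fun k => (mbeta N B * r) ^ k / INR (Factorial.fact k))).
    intros m. unfold Rdiv. apply Rmult_le_pos. apply pow_le. nra. left; apply Rinv_0_lt_compat, fact_pos.
    nra. }
  destruct (CV_radius_bounded (mco N B i j)) as [Hub _].
  specialize (Hub r S). destruct (CV_radius (mco N B i j)); simpl in *; auto. unfold r in Hub. lra. Qed.

Lemma mexp_PSeries N B i j x : (i < N)%nat -> mexp N B x i j = PSeries (mco N B i j) x.
Proof. intros Hi.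
  assert (Hcv : Un_cv (fun M => sum_f_R0 (fun k => mpow N B k i j * x ^ k / INR (Factorial.fact k)) M) (PSeries (mco N B i j) x)).
  { pose proof (PSeries_correct (mco N B i j) x (CV_radius_inside _ _ (mco_radius N B i j x Hi))) as P.
    apply is_pseries_R in P. apply is_series_Reals in P.
    intros e He. destruct (P e He) as [M HM]. exists M. intros m Hm. specialize (HM m Hm).
    replace (sum_f_R0 (fun k => mpow N B k i j * x ^ k / INR (Factorial.fact k)) m)
      with (sum_f_R0 (fun n => mco N B i j n * x ^ n) m). auto.
    apply sum_eq. intros. unfold mco. field. apply Rgt_not_eq, fact_pos. }
  unfold mexp.
  assert (Hex : exists l, Un_cv (fun M => sum_f_R0 (fun k => mpow N B k i j * x ^ k / INR (Factorial.fact k)) M) l) by eauto.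
  pose proof (epsilon_spec (inhabits 0) _ Hex) as Hs.
  eapply UL_sequence; eauto. Qed.

Lemma PS_derive_mco N B i j k : PS_derive (mco N B i j) k = rsum N (fun l => B i l * mco N B l j k).
Proof. unfold PS_derive, mco. rewrite mpow_S.
  set (X := rsum N (fun l => B i l * mpow N B k l j)).
  replace (INR (S k) * (X / INR (Factorial.fact (S k)))) with (X / INR (Factorial.fact k)).
  unfold X, Rdiv. rewrite <- rsum_scal_r. apply rsum_ext; intros; ring.
  change (Factorial.fact (S k)) with ((S k) * Factorial.fact k)%nat. rewrite mult_INR. field. split. apply Rgt_not_eq, fact_pos. apply not_0_INR; lia. Qed.

Lemma PSeries_rsum N (B : mat) i j x m : (m <= N)%nat -> (forall l, (l < N)%nat -> Rbar_lt (Rabs x) (CV_radius (mco N B l j))) ->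
  ex_pseries (fun k => rsum m (fun l => B i l * mco N B l j k)) x /\
  PSeries (fun k => rsum m (fun l => B i l * mco N B l j k)) x = rsum m (fun l => B i l * PSeries (mco N B l j) x).
Proof. intros Hm Hr. induction m.
  - simpl. split. apply CV_radius_inside. rewrite CV_radius_const_0. simpl; auto.
    apply PSeries_const_0.
  - destruct IHm as [E1 E2]; [lia|].
    assert (E3 : ex_pseries (PS_scal (B i m) (mco N B m j)) x).
    { apply ex_pseries_scal. apply Rmult_comm. apply CV_radius_inside. apply Hr. lia. }
    split.
    + apply (ex_pseries_ext (PS_plus (fun k => rsum m (fun l => B i l * mco N B l j k)) (PS_scal (B i m) (mco N B m j)))).
      intros k. reflexivity. apply ex_pseries_plus; auto.
    + rewrite (PSeries_ext _ (PS_plus (fun k => rsum m (fun l => B i l * mco N B l j k)) (PS_scal (B i m) (mco N B m j)))).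
      rewrite PSeries_plus; auto. rewrite E2, PSeries_scal. simpl. auto.
      intros k. reflexivity. Qed.

Lemma mexp_is_derive N B i j x : (i < N)%nat -> is_derive (fun t => mexp N B t i j) x (mmul N B (mexp N B x) i j).
Proof. intros Hi.
  apply (is_derive_ext (PSeries (mco N B i j))). intros t. rewrite mexp_PSeries; auto.
  replace (mmul N B (mexp N B x) i j) with (PSeries (PS_derive (mco N B i j)) x).
  apply is_derive_PSeries. apply mco_radius; auto.
  rewrite (PSeries_ext _ (fun k => rsum N (fun l => B i l * mco N B l j k))) by apply PS_derive_mco.
  destruct (PSeries_rsum N B i j x N (le_n N)) as [_ E]. intros; apply mco_radius; auto.
  rewrite E. unfold mmul. apply rsum_ext. intros l Hl. rewrite mexp_PSeries; auto. Qed.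

Lemma mexp_0 N B i j : (i < N)%nat -> mexp N B 0 i j = idm i j.
Proof. intros Hi. rewrite mexp_PSeries, PSeries_0; auto. unfold mco. simpl. field. Qed.

Lemma D_of_derive_shift a b g g' c : (forall x, is_derive g x (g' x)) ->
  has_deriv_on a b (fun s => g (s - c)) (fun s => g' (s - c)).
Proof. intros H t Ht e He. pose proof (proj1 (is_derive_Reals g (t - c) (g' (t - c))) (H _)) as D.
  destruct (D e He) as [d P]. exists d. split; [apply cond_pos|]. intros h Hh Hd _.
  replace (t + h - c) with (t - c + h) by ring. apply P; auto. Qed.

Lemma D_of_derive a b g g' : (forall x, is_derive g x (g' x)) -> has_deriv_on a b g g'.
Proof. intros H. pose proof (D_of_derive_shift a b g g' 0 H) as D.
  apply (D_ext _ _ _ (fun s => g' (s - 0))). intros; rewrite Rminus_0_r; auto.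
  apply (D_ext_f _ _ (fun s => g (s - 0))). intros; rewrite Rminus_0_r; auto. auto. Qed.

Lemma mexp_D a b N B i j c : (i < N)%nat ->
  has_deriv_on a b (fun s => mexp N B (s - c) i j) (fun s => mmul N B (mexp N B (s - c)) i j).
Proof. intros Hi. apply (D_of_derive_shift a b (fun t => mexp N B t i j) (fun t => mmul N B (mexp N B t) i j) c).
  intros; apply mexp_is_derive; auto. Qed.

Lemma mexp_cont N B i j c x : (i < N)%nat -> continuous (fun s => mexp N B (s - c) i j) x.
Proof. intros Hi. apply continuity_pt_filterlim.
  assert (D : is_derive (fun s => mexp N B (s - c) i j) x (scal 1 (mmul N B (mexp N B (x - c)) i j))).
  { apply (is_derive_comp (fun t => mexp N B t i j) (fun s => s - c)). apply mexp_is_derive; auto.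
    auto_derive. auto. ring. }
  apply is_derive_Reals in D. apply derivable_continuous_pt. eexists. exact D. Qed.

Lemma rsum_cont n (F : nat -> R -> R) x : (forall i, (i < n)%nat -> continuous (F i) x) ->
  continuous (fun s => rsum n (fun i => F i s)) x.
Proof. induction n; intros H; simpl. apply continuous_const.
  apply (continuous_plus (fun s => rsum n (fun i => F i s)) (F n)). apply IHn; intros; apply H; lia. apply H; lia. Qed.

Lemma fnorm_mexp_cont n A c x : continuous (fun s => fnorm n n (mexp n A (s - c))) x.
Proof. unfold fnorm. apply continuous_sqrt_comp.
  apply (rsum_cont n (fun i s => rsum n (fun j => mexp n A (s - c) i j ^ 2))). intros i Hi.
  apply (rsum_cont n (fun j s => mexp n A (s - c) i j ^ 2)). intros j Hj.
  apply (continuous_ext (fun s => mexp n A (s - c) i j * mexp n A (s - c) i j)). intros; simpl; ring.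
  apply (continuous_mult (fun s => mexp n A (s - c) i j) (fun s => mexp n A (s - c) i j)); apply mexp_cont; auto. Qed.

Lemma integral_RInt g a b : a <= b -> (forall x, continuous g x) -> integral g a b = RInt g a b.
Proof. intros Hab Hc. unfold integral.
  assert (Hex : exists v, exists pr : Riemann_integrable g a b, RiemannInt pr = v).
  { assert (pr : Riemann_integrable g a b). apply ex_RInt_Reals_0. apply (ex_RInt_continuous (V:=R_CompleteNormedModule)). intros; apply Hc.
    exists (RiemannInt pr). exists pr. reflexivity. }
  destruct (epsilon_spec (inhabits 0) _ Hex) as [pr E]. rewrite <- E. symmetry. apply RInt_Reals. Qed.

Lemma RInt_D g a b c : (forall x, continuous g x) -> has_deriv_on a b (fun x => RInt g c x) g.
Proof. intros Hc. apply D_of_derive. intros x. apply (is_derive_RInt g (RInt g c) c x); auto.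
  apply filter_forall. intros y. apply (RInt_correct (V:=R_CompleteNormedModule)). apply (ex_RInt_continuous (V:=R_CompleteNormedModule)). intros; apply Hc. Qed.

From Stdlib Require Import Reals Lra Lia Psatz Arith Classical ClassicalEpsilon.
From Coquelicot Require Import Coquelicot.
Open Scope R_scope.

Lemma D_mvec_const a b n (X X' : R -> mat) w :
  (forall i j, (i < n)%nat -> (j < n)%nat -> has_deriv_on a b (fun t => X t i j) (fun t => X' t i j)) ->
  Dv n a b (fun t => mvec n (X t) w) (fun t => mvec n (X' t) w).
Proof. intros H i Hi. unfold mvec. apply (D_rsum a b n (fun k t => X t i k * w k) (fun k t => X' t i k * w k)).
  intros k Hk. apply (D_ext _ _ _ (fun t => X' t i k * w k + X t i k * 0)). intros; ring.
  apply D_mult. apply H; auto. apply D_const. Qed.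

Lemma D_mvec a b n (X X' : R -> mat) x x' :
  (forall i j, (i < n)%nat -> (j < n)%nat -> has_deriv_on a b (fun t => X t i j) (fun t => X' t i j)) ->
  Dv n a b x x' ->
  Dv n a b (fun t => mvec n (X t) (x t)) (fun t => vadd (mvec n (X' t) (x t)) (mvec n (X t) (x' t))).
Proof. intros H Hx i Hi. unfold mvec, vadd.
  apply (D_ext _ _ _ (fun t => rsum n (fun k => X' t i k * x t k + X t i k * x' t k))).
  intros; apply rsum_plus.
  apply (D_rsum a b n (fun k t => X t i k * x t k) (fun k t => X' t i k * x t k + X t i k * x' t k)).
  intros k Hk. apply D_mult. apply H; auto. apply Hx; auto. Qed.

Lemma Dv_ext a b n f f' g' : (forall t, a <= t <= b -> veq n (f' t) (g' t)) -> Dv n a b f f' -> Dv n a b f g'.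
Proof. intros E H i Hi. apply (D_ext _ _ _ (fun t => f' t i)). intros; apply E; auto. apply H; auto. Qed.

Lemma Dv_ext_f a b n f g f' : (forall t, a <= t <= b -> veq n (f t) (g t)) -> Dv n a b f f' -> Dv n a b g f'.
Proof. intros E H i Hi. apply (D_ext_f _ _ (fun t => f t i)). intros; apply E; auto. apply H; auto. Qed.

Lemma Dv_sub a b n f f' g g' : Dv n a b f f' -> Dv n a b g g' -> Dv n a b (fun t => vsub (f t) (g t)) (fun t => vsub (f' t) (g' t)).
Proof. intros H1 H2 i Hi. unfold vsub. apply D_minus; auto. Qed.

Lemma Dv_add a b n f f' g g' : Dv n a b f f' -> Dv n a b g g' -> Dv n a b (fun t => vadd (f t) (g t)) (fun t => vadd (f' t) (g' t)).
Proof. intros H1 H2 i Hi. unfold vadd. apply D_plus; auto. Qed.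

Lemma abs_le_both x c : Rabs x <= c -> - c <= x <= c.
Proof. intros H. pose proof (Rle_abs x). pose proof (Rle_abs (-x)). rewrite Rabs_Ropp in H1. lra. Qed.

Lemma lin_uniq n a b (M : R -> mat) L z s : 0 <= L ->
  (forall t, a <= t <= b -> forall x, vn n (mvec n (M t) x) <= L * vn n x) ->
  Dv n a b z (fun t => mvec n (M t) (z t)) -> a <= s <= b -> veq n (z s) (fun _ => 0) ->
  forall tau, a <= tau <= b -> veq n (z tau) (fun _ => 0).
Proof. intros HL HM Hz Hs Hzs tau Ht.
  set (f := fun t => ip n (z t) (z t)).
  assert (Df : has_deriv_on a b f (fun t => ip n (mvec n (M t) (z t)) (z t) + ip n (z t) (mvec n (M t) (z t)))).
  { apply D_ip; auto. }
  assert (Bf : forall t, a <= t <= b -> Rabs (ip n (mvec n (M t) (z t)) (z t) + ip n (z t) (mvec n (M t) (z t))) <= 2 * L * f t).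
  { intros t Ht'. rewrite ip_sym. replace (ip n (z t) (mvec n (M t) (z t)) + ip n (z t) (mvec n (M t) (z t))) with (2 * ip n (z t) (mvec n (M t) (z t))) by ring.
    rewrite Rabs_mult, Rabs_right by lra. pose proof (CS' n (z t) (mvec n (M t) (z t))). pose proof (HM t Ht' (z t)).
    unfold f. rewrite <- vn_sq. pose proof (vn_nonneg n (z t)).
    assert (vn n (z t) * vn n (mvec n (M t) (z t)) <= vn n (z t) * (L * vn n (z t))) by (apply Rmult_le_compat_l; auto). nra. }
  assert (f0 : f s = 0). { unfold f, ip. apply rsum_0'. intros. rewrite Hzs; auto; ring. }
  assert (fnn : forall t, 0 <= f t) by (intros; apply ip_nonneg).
  assert (ftau : f tau <= 0).
  { destruct (Rle_dec s tau).
    - assert (exp (-(2*L) * tau) * f tau <= exp (-(2*L) * s) * f s).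
      { apply (mono a b (fun t => exp (-(2*L) * t) * f t) (fun t => (-(2*L)) * exp (-(2*L)*t) * f t + exp (-(2*L)*t) * (ip n (mvec n (M t) (z t)) (z t) + ip n (z t) (mvec n (M t) (z t))))); auto; try lra.
        apply D_mult; auto. apply D_exp.
        intros t Ht'. specialize (Bf t Ht'). pose proof (exp_pos (-(2*L)*t)). apply abs_le_both in Bf.
        assert (exp (-(2*L)*t) * (ip n (mvec n (M t) (z t)) (z t) + ip n (z t) (mvec n (M t) (z t))) <= exp (-(2*L)*t) * (2*L*f t)) by (apply Rmult_le_compat_l; lra).
        nra. }
      rewrite f0, Rmult_0_r in H. pose proof (exp_pos (-(2*L) * tau)). nra.
    - assert (exp ((2*L) * tau) * f tau <= exp ((2*L) * s) * f s).
      { assert (- (exp ((2*L) * s) * f s) <= - (exp ((2*L) * tau) * f tau)); [|lra].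
        apply (mono a b (fun t => - (exp ((2*L) * t) * f t)) (fun t => - ((2*L) * exp ((2*L)*t) * f t + exp ((2*L)*t) * (ip n (mvec n (M t) (z t)) (z t) + ip n (z t) (mvec n (M t) (z t)))))); auto; try lra.
        apply D_opp. apply D_mult; auto. apply D_exp.
        intros t Ht'. specialize (Bf t Ht'). pose proof (exp_pos ((2*L)*t)). apply abs_le_both in Bf.
        assert (exp ((2*L)*t) * (- (2*L*f t)) <= exp ((2*L)*t) * (ip n (mvec n (M t) (z t)) (z t) + ip n (z t) (mvec n (M t) (z t)))) by (apply Rmult_le_compat_l; lra).
        nra. }
      rewrite f0, Rmult_0_r in H. pose proof (exp_pos ((2*L) * tau)). nra. }
  intros i Hi. apply (vn_zero n (z tau)); auto. unfold vn. fold (f tau). assert (f tau = 0) by (specialize (fnn tau); lra).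
  rewrite H, sqrt_0; auto. Qed.

Lemma D_poly a b T0 k1 k2 : has_deriv_on a b (fun r => k1 * r + k2 * (T0 * r - r * r / 2)) (fun r => k1 + k2 * (T0 - r)).
Proof. apply (D_ext_f _ _ (fun r => k1 * r + k2 * (T0 * r - /2 * (r * r)))). intros; field.
  eapply D_ext; [|apply D_plus; [apply D_scal; apply D_id| apply D_scal; apply D_minus; [apply D_scal; apply D_id| ]]].
  2: { apply (D_scal a b (/2) (fun r => r * r)). apply D_mult; apply D_id. }
  intros; simpl. field. Qed.

Definition Mt (n : nat) (AG : mat) (gamma : R) (K : R -> mat) (t : R) : mat := msub AG (mscal gamma (K t)).
Definition Kder (n : nat) (AG Qh : mat) (gamma : R) (K : R -> mat) (t : R) : mat :=
  madd (mopp (madd (mmul n (K t) AG) (mmul n (mtr AG) (K t)))) (madd (mscal gamma (mmul n (K t) (K t))) Qh).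

Section Core.
Variables (n : nat) (T gamma c1 c2 : R) (AG A S Qg Qh : mat) (K : R -> mat) (Phi : R -> R -> mat).
Hypothesis HT : 0 < T.
Hypothesis Hg : 0 < gamma.
Hypothesis HKd : forall i j, (i < n)%nat -> (j < n)%nat -> has_deriv_on 0 T (fun t => K t i j) (fun t => Kder n AG Qh gamma K t i j).
Hypothesis HKT : forall i j, (i < n)%nat -> (j < n)%nat -> K T i j = 0.
Hypothesis HKsym : forall t, 0 <= t <= T -> forall i j, (i < n)%nat -> (j < n)%nat -> K t j i = K t i j.
Hypothesis HPhi0 : forall s, 0 <= s <= T -> meq n n (Phi s s) idm.
Hypothesis HPhid : forall s, 0 <= s <= T -> forall i j, (i < n)%nat -> (j < n)%nat ->
  has_deriv_on 0 T (fun t => Phi t s i j) (fun t => mmul n (Mt n AG gamma K t) (Phi t s) i j).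
Hypothesis Hc1 : forall t, 0 <= t <= T -> fnorm n n (K t) <= c1.
Hypothesis Hc2 : forall t s, 0 <= t <= T -> 0 <= s <= T -> fnorm n n (Phi t s) <= c2.

Lemma c1_nonneg : 0 <= c1.
Proof. pose proof (Hc1 0 ltac:(lra)). pose proof (fnorm_nonneg n n (K 0)). lra. Qed.
Lemma c2_nonneg : 0 <= c2.
Proof. pose proof (Hc2 0 0 ltac:(lra) ltac:(lra)). pose proof (fnorm_nonneg n n (Phi 0 0)). lra. Qed.

Lemma M_bound t x : 0 <= t <= T -> vn n (mvec n (Mt n AG gamma K t) x) <= (fnorm n n AG + gamma * c1) * vn n x.
Proof. intros Ht.
  assert (E : vn n (mvec n (Mt n AG gamma K t) x) = vn n (vadd (mvec n AG x) (vopp (vscal gamma (mvec n (K t) x))))).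
  { apply vn_ext. intros i _. unfold Mt. rewrite mvec_msub, mvec_mscal. unfold vadd, vopp, vscal. ring. }
  rewrite E. eapply Rle_trans; [apply vn_triangle|]. rewrite vn_opp, vn_scal, Rabs_right by lra.
  pose proof (mvec_bound n AG x). pose proof (mvec_bound n (K t) x). pose proof (Hc1 t Ht). pose proof (vn_nonneg n x).
  pose proof (fnorm_nonneg n n (K t)).
  assert (fnorm n n (K t) * vn n x <= c1 * vn n x) by (apply Rmult_le_compat_r; auto). nra. Qed.

Lemma Phi_mvec_D s w : 0 <= s <= T ->
  Dv n 0 T (fun t => mvec n (Phi t s) w) (fun t => mvec n (Mt n AG gamma K t) (mvec n (Phi t s) w)).
Proof. intros Hs. eapply Dv_ext; [|apply (D_mvec_const 0 T n (fun t => Phi t s) (fun t => mmul n (Mt n AG gamma K t) (Phi t s)) w)].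
  intros t Ht i Hi. apply mvec_mmul. intros; apply HPhid; auto. Qed.

Lemma cocycle tau s r v : 0 <= tau <= T -> 0 <= s <= T -> 0 <= r <= T ->
  veq n (mvec n (Phi tau s) (mvec n (Phi s r) v)) (mvec n (Phi tau r) v).
Proof. intros Htau Hs Hr.
  set (z := fun t => vsub (mvec n (Phi t s) (mvec n (Phi s r) v)) (mvec n (Phi t r) v)).
  assert (Hz : veq n (z tau) (fun _ => 0)).
  { apply (lin_uniq n 0 T (Mt n AG gamma K) (fnorm n n AG + gamma * c1) z s); auto.
    pose proof (fnorm_nonneg n n AG). pose proof c1_nonneg. nra.
    intros; apply M_bound; auto.
    eapply Dv_ext; [|apply Dv_sub; [apply Phi_mvec_D| apply Phi_mvec_D]]; auto.
    intros t Ht i Hi. unfold z. rewrite mvec_vsub. reflexivity.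
    intros i Hi. unfold z, vsub. rewrite (mvec_ext n (Phi s s) idm (mvec n (Phi s r) v) (mvec n (Phi s r) v) i); [|intros; apply HPhi0; auto| intros k _; reflexivity].
    rewrite mvec_idm; auto. ring. }
  intros i Hi. specialize (Hz i Hi). unfold z, vsub in Hz. lra. Qed.

Lemma lim0_abs0 a b t F L : lim0 a b t F L -> lim0 a b t (fun h => Rabs (F h - L)) 0.
Proof. intros H e He. destruct (H e He) as [d [Hd P]]. exists d; split; auto. intros.
  rewrite Rminus_0_r, Rabs_Rabsolu. auto. Qed.

Definition ev (k : nat) : vec := fun l => idm l k.
Lemma mvec_ev N X k i : (k < N)%nat -> mvec N X (ev k) i = X i k.
Proof. intros. unfold mvec, ev. apply rsum_delta'; auto. Qed.

Lemma Phi_cont2 t r i k : 0 <= t <= T -> 0 <= r <= T -> (i < n)%nat -> (k < n)%nat ->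
  lim0 0 T r (fun h => Phi t (r + h) i k) (Phi t r i k).
Proof. intros Ht Hr Hi Hk. apply lim0_from0.
  apply (lim0_bound0 _ _ _ _ (fun h => rsum n (fun l => c2 * Rabs (Phi (r + h) r l k - Phi r r l k)))).
  - intros h Hh Hab.
    assert (E1 : Phi t r i k = rsum n (fun l => Phi t (r + h) i l * Phi (r + h) r l k)).
    { rewrite <- (mvec_ev n (Phi t r) k i Hk). rewrite <- (cocycle t (r + h) r (ev k)); auto.
      unfold mvec at 1. apply rsum_ext. intros l Hl. rewrite mvec_ev; auto. }
    assert (E2 : Phi t (r + h) i k = rsum n (fun l => Phi t (r + h) i l * Phi r r l k)).
    { rewrite <- (mvec_ev n (Phi t (r + h)) k i Hk). unfold mvec. apply rsum_ext. intros l Hl.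
      unfold ev. rewrite (HPhi0 r Hr l k); auto. }
    rewrite E1, E2, <- rsum_minus. eapply Rle_trans; [apply rsum_abs|]. apply rsum_le. intros l Hl.
    replace (Phi t (r + h) i l * Phi r r l k - Phi t (r + h) i l * Phi (r + h) r l k) with
      (Phi t (r + h) i l * - (Phi (r + h) r l k - Phi r r l k)) by ring.
    rewrite Rabs_mult, Rabs_Ropp. apply Rmult_le_compat_r. apply Rabs_pos.
    eapply Rle_trans; [apply (entry_le_fnorm n (Phi t (r + h)) i l Hi Hl)| apply (Hc2 t (r + h)); auto].
  - eapply lim0_ext_L; [|apply (lim0_rsum _ _ _ n (fun l h => c2 * Rabs (Phi (r + h) r l k - Phi r r l k)) (fun _ => 0))].
    apply rsum_0. intros l Hl. eapply lim0_ext_L; [|apply lim0_scal; apply lim0_abs0; apply (D_cont 0 T (fun t => Phi t r l k) _ r (HPhid r Hr l k Hl Hk) Hr)].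
    ring. Qed.

Lemma q_deriv t m m' : 0 <= t <= T -> Dv n 0 T m m' ->
  Dv n 0 T (fun r => mvec n (Phi t r) (m r)) (fun r => mvec n (Phi t r) (vsub (m' r) (mvec n (Mt n AG gamma K r) (m r)))).
Proof. intros Ht Hm i Hi r Hr.
  set (w := fun tau => mvec n (Phi tau r) (m r)).
  assert (Dw : Dv n 0 T w (fun tau => mvec n (Mt n AG gamma K tau) (mvec n (Phi tau r) (m r)))) by (apply Phi_mvec_D; auto).
  set (Dh := fun k h => (m (r + h) k - m r k) / h - (w (r + h) k - w r k) / h).
  assert (LD : forall k, (k < n)%nat -> lim0 0 T r (Dh k) (vsub (m' r) (mvec n (Mt n AG gamma K r) (m r)) k)).
  { intros k Hk. unfold Dh, vsub. apply lim0_minus. apply (D_lim _ _ _ _ r (Hm k Hk) Hr).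
    replace (mvec n (Mt n AG gamma K r) (m r) k) with (mvec n (Mt n AG gamma K r) (mvec n (Phi r r) (m r)) k).
    apply (D_lim _ _ _ _ r (Dw k Hk) Hr).
    apply mvec_ext. intros; reflexivity. intros l Hl. rewrite (mvec_ext n (Phi r r) idm (m r) (m r) l); [apply mvec_idm; auto| |intros q _; reflexivity].
    intros; apply HPhi0; auto. }
  change (lim0 0 T r (fun h => (mvec n (Phi t (r + h)) (m (r + h)) i - mvec n (Phi t r) (m r) i) / h)
     (mvec n (Phi t r) (vsub (m' r) (mvec n (Mt n AG gamma K r) (m r))) i)).
  eapply lim0_ext; [|apply (lim0_rsum _ _ _ n (fun k h => Phi t (r + h) i k * Dh k h))].
  - intros h Hh Hab. simpl.
    assert (Wr : veq n (w r) (m r)). { intros l Hl. unfold w. rewrite (mvec_ext n (Phi r r) idm (m r) (m r) l); [apply mvec_idm; auto| |intros q _; reflexivity]. intros; apply HPhi0; auto. }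
    assert (Co : mvec n (Phi t r) (m r) i = mvec n (Phi t (r + h)) (w (r + h)) i).
    { unfold w. symmetry. apply cocycle; auto. }
    rewrite Co. unfold mvec at 1 2. unfold Rdiv. rewrite <- rsum_minus, <- rsum_scal_r. apply rsum_ext. intros k Hk.
    unfold Dh. rewrite (Wr k Hk). field. auto.
  - intros k Hk. apply lim0_mult. apply Phi_cont2; auto. apply LD; auto. Qed.

Lemma mtr_msub X Y : mtr (msub X Y) = msub (mtr X) (mtr Y).
Proof. reflexivity. Qed.
Lemma mtr_mscal c X : mtr (mscal c X) = mscal c (mtr X).
Proof. reflexivity. Qed.

Lemma vadd_app u v i : vadd u v i = u i + v i. Proof. reflexivity. Qed.
Lemma vsub_app u v i : vsub u v i = u i - v i. Proof. reflexivity. Qed.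
Lemma vopp_app u i : vopp u i = - u i. Proof. reflexivity. Qed.
Lemma vscal_app c u i : vscal c u i = c * u i. Proof. reflexivity. Qed.

Lemma alg1 Kt pp mm yy i : (forall i j, (i < n)%nat -> (j < n)%nat -> Kt j i = Kt i j) -> (i < n)%nat ->
  mvec n (mtr (msub AG (mscal gamma Kt))) (vadd pp (mvec n Kt mm)) i
  + (vadd (vsub (vopp (mvec n (mtr AG) pp)) (mvec n Qh mm))
      (vadd (mvec n (madd (mopp (madd (mmul n Kt AG) (mmul n (mtr AG) Kt))) (madd (mscal gamma (mmul n Kt Kt)) Qh)) mm)
            (mvec n Kt (vadd (vadd (mvec n AG mm) (mvec n S yy)) (vscal gamma pp))))) i
  = mvec n Kt (mvec n S yy) i.
Proof. intros Hs Hi. rewrite mtr_msub, mtr_mscal, mvec_msub, mvec_mscal.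
  rewrite (mvec_ext n (mtr Kt) Kt (vadd pp (mvec n Kt mm)) (vadd pp (mvec n Kt mm)) i).
  2: { intros k Hk. unfold mtr. apply Hs; auto. } 2: { intros q _; reflexivity. }
  rewrite !vadd_app, !vsub_app, !vopp_app.
  rewrite ?mvec_vadd, ?mvec_vscal, ?mvec_vadd.
  rewrite ?mvec_madd, ?mvec_mopp, ?mvec_madd, ?mvec_mscal, ?mvec_mmul.
  unfold vadd, vsub, vopp. lra. Qed.

Section Hom.
Variables (m p y : R -> vec).
Hypothesis Hm : Dv n 0 T m (fun t => vadd (vadd (mvec n AG (m t)) (mvec n S (y t))) (vscal gamma (p t))).
Hypothesis Hp : Dv n 0 T p (fun t => vsub (vopp (mvec n (mtr AG) (p t))) (mvec n Qh (m t))).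
Hypothesis Hy : Dv n 0 T y (fun t => vadd (vopp (mvec n (mtr A) (y t))) (mvec n Qg (m t))).
Hypothesis Hm0 : veq n (m 0) (fun _ => 0).
Hypothesis HpT : veq n (p T) (fun _ => 0).
Hypothesis HyT : veq n (y T) (fun _ => 0).
Variables c3 c4 : R.
Hypothesis Hc3 : forall t, 0 <= t <= T -> integral (fun s => fnorm n n (mexp n A (s - t)) * s) t T <= c3.
Hypothesis Hc4 : forall t, 0 <= t <= T -> integral (fun s => fnorm n n (mexp n A (s - t)) * (T * s - s ^ 2 / 2)) t T <= c4.

Definition phi (t : R) : vec := vadd (p t) (mvec n (K t) (m t)).

Lemma phi_D : Dv n 0 T phi (fun t => vadd (vsub (vopp (mvec n (mtr AG) (p t))) (mvec n Qh (m t)))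
   (vadd (mvec n (Kder n AG Qh gamma K t) (m t)) (mvec n (K t) (vadd (vadd (mvec n AG (m t)) (mvec n S (y t))) (vscal gamma (p t)))))).
Proof. unfold phi. apply Dv_add; auto. apply D_mvec; auto. Qed.

Section WithY.
Variable Y : R.
Hypothesis HY : forall t, 0 <= t <= T -> vn n (y t) <= Y.

Lemma Y_nonneg : 0 <= Y.
Proof. pose proof (HY 0 ltac:(lra)). pose proof (vn_nonneg n (y 0)). lra. Qed.

Lemma phi_bound r : 0 <= r <= T -> vn n (phi r) <= c1 * c2 * fnorm n n S * Y * (T - r).
Proof. intros Hr. set (w := phi r).
  set (chi := fun tau => ip n (mvec n (Phi tau r) w) (phi tau)).
  set (chi' := fun tau => ip n (mvec n (Phi tau r) w) (mvec n (K tau) (mvec n S (y tau)))).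
  assert (Dchi : has_deriv_on 0 T chi chi').
  { eapply D_ext; [|apply (D_ip 0 T n _ _ _ _ (Phi_mvec_D r w Hr) phi_D)].
    intros tau Htau. unfold chi'. rewrite ip_mvec, <- ip_vadd_r. apply ip_ext. intros q _; reflexivity.
    intros i Hi. rewrite vadd_app. unfold Mt, phi. rewrite (alg1 (K tau)); auto. }
  set (C := c2 * vn n w * (c1 * fnorm n n S * Y)).
  assert (Bchi : forall tau, 0 <= tau <= T -> Rabs (chi' tau) <= C).
  { intros tau Htau. unfold chi'. eapply Rle_trans; [apply CS'|]. unfold C.
    apply Rmult_le_compat; [apply vn_nonneg|apply vn_nonneg| |].
    - eapply Rle_trans; [apply mvec_bound|]. apply Rmult_le_compat_r; [apply vn_nonneg| apply Hc2; auto].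
    - eapply Rle_trans; [apply mvec_bound|]. rewrite Rmult_assoc.
      apply Rmult_le_compat; [apply fnorm_nonneg| apply vn_nonneg | apply Hc1; auto|].
      eapply Rle_trans; [apply mvec_bound|]. apply Rmult_le_compat_l; [apply fnorm_nonneg| apply HY; auto]. }
  pose proof (mvi 0 T chi chi' (fun tau => C * tau) (fun _ => C) r T Dchi
     ltac:(eapply D_ext; [|apply D_scal; apply D_id]; intros; simpl; ring) Bchi ltac:(lra) ltac:(lra) ltac:(lra)) as Hmvi.
  assert (E1 : chi T = 0). { unfold chi, ip. apply rsum_0'. intros i Hi. unfold phi, vadd.
    rewrite HpT by auto. unfold mvec. rewrite (rsum_0' n (fun k => K T i k * m T k)). ring. intros k Hk. rewrite HKT; auto. ring. }
  assert (E2 : chi r = vn n w * vn n w). { rewrite vn_sq. unfold chi. apply ip_ext; [|intros q _; reflexivity].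
    intros i Hi. rewrite (mvec_ext n (Phi r r) idm w w i). apply mvec_idm; auto. intros; apply HPhi0; auto. intros q _; reflexivity. }
  rewrite E1, E2 in Hmvi. rewrite Rminus_0_l, Rabs_Ropp, Rabs_right in Hmvi by (apply Rle_ge, Rmult_le_pos; apply vn_nonneg).
  unfold C in Hmvi. fold w.
  pose proof (vn_nonneg n w) as Hw0. pose proof c1_nonneg. pose proof c2_nonneg. pose proof Y_nonneg. pose proof (fnorm_nonneg n n S).
  destruct (Req_dec (vn n w) 0) as [Hw|Hw]. rewrite Hw.
  repeat apply Rmult_le_pos; auto; lra.
  apply Rmult_le_reg_l with (vn n w). lra. nra. Qed.

Lemma g_ident r : 0 <= r <= T -> veq n (vsub (vadd (vadd (mvec n AG (m r)) (mvec n S (y r))) (vscal gamma (p r))) (mvec n (Mt n AG gamma K r) (m r)))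
  (vadd (mvec n S (y r)) (vscal gamma (phi r))).
Proof. intros Hr i Hi. unfold Mt, phi. rewrite !vsub_app, !vadd_app, mvec_msub, mvec_mscal, !vscal_app, vadd_app. ring. Qed.

Lemma m_bound t : 0 <= t <= T -> vn n (m t) <= c2 * fnorm n n S * Y * (t + gamma * c1 * c2 * (T * t - t * t / 2)).
Proof. intros Ht.
  pose proof c1_nonneg. pose proof c2_nonneg. pose proof Y_nonneg. pose proof (fnorm_nonneg n n S).
  pose proof (mvi_vec 0 T n (fun r => mvec n (Phi t r) (m r)) _
     (fun r => (c2 * fnorm n n S * Y) * r + (gamma * c1 * c2 * c2 * fnorm n n S * Y) * (T * r - r * r / 2))
     (fun r => (c2 * fnorm n n S * Y) + (gamma * c1 * c2 * c2 * fnorm n n S * Y) * (T - r)) 0 t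
     (q_deriv t m _ Ht Hm) (D_poly 0 T T _ _)) as Hmv.
  assert (Hb : forall r, 0 <= r <= T -> vn n (mvec n (Phi t r) (vsub (vadd (vadd (mvec n AG (m r)) (mvec n S (y r))) (vscal gamma (p r))) (mvec n (Mt n AG gamma K r) (m r))))
     <= (c2 * fnorm n n S * Y) + (gamma * c1 * c2 * c2 * fnorm n n S * Y) * (T - r)).
  { intros r Hr. eapply Rle_trans; [apply mvec_bound|].
    rewrite (vn_ext n _ _ (g_ident r Hr)).
    apply Rle_trans with (c2 * (fnorm n n S * Y + gamma * (c1 * c2 * fnorm n n S * Y * (T - r)))).
    apply Rmult_le_compat; [apply fnorm_nonneg|apply vn_nonneg| apply Hc2; auto|].
    eapply Rle_trans; [apply vn_triangle|]. apply Rplus_le_compat.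
    eapply Rle_trans; [apply mvec_bound|]. apply Rmult_le_compat_l; [apply fnorm_nonneg| apply HY; auto].
    rewrite vn_scal, Rabs_right by lra. apply Rmult_le_compat_l; [lra| apply phi_bound; auto].
    right; ring. }
  specialize (Hmv Hb ltac:(lra) ltac:(lra) ltac:(lra)).
  replace (vn n (m t)) with (vn n (vsub (mvec n (Phi t t) (m t)) (mvec n (Phi t 0) (m 0)))).
  eapply Rle_trans; [apply Hmv|]. cbv beta. apply Req_le. field.
  apply vn_ext. intros i Hi. rewrite vsub_app.
  rewrite (mvec_ext n (Phi t t) idm (m t) (m t) i), mvec_idm; auto. 2: intros; apply HPhi0; auto. 2: intros q _; reflexivity.
  unfold mvec at 1. rewrite (rsum_0' n). ring. intros k Hk. rewrite Hm0; auto; ring. Qed.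

Lemma mtr_mmul_eq X Z i j : mtr (mmul n X Z) i j = mmul n (mtr Z) (mtr X) i j.
Proof. unfold mtr, mmul. apply rsum_ext; intros; ring. Qed.

Lemma y_bound t : 0 <= t <= T -> vn n (y t) <= fnorm n n Qg * c2 * fnorm n n S * Y * (c3 + gamma * c1 * c2 * c4).
Proof. intros Ht.
  pose proof c1_nonneg. pose proof c2_nonneg. pose proof Y_nonneg. pose proof (fnorm_nonneg n n S). pose proof (fnorm_nonneg n n Qg).
  set (E := fun s => mexp n A (s - t)).
  set (g3 := fun s => fnorm n n (mexp n A (s - t)) * s).
  set (g4 := fun s => fnorm n n (mexp n A (s - t)) * (T * s - s ^ 2 / 2)).
  assert (C3 : forall x, continuous g3 x). { intros x. apply (continuous_mult (fun s => fnorm n n (mexp n A (s - t))) (fun s => s)).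
    apply fnorm_mexp_cont. apply continuous_id. }
  assert (C4 : forall x, continuous g4 x). { intros x. apply (continuous_mult (fun s => fnorm n n (mexp n A (s - t))) (fun s => T * s - s ^ 2 / 2)).
    apply fnorm_mexp_cont. apply continuity_pt_filterlim. apply derivable_continuous_pt. reg. }
  set (k0 := fnorm n n Qg * c2 * fnorm n n S * Y).
  assert (DB : has_deriv_on 0 T (fun s => k0 * (RInt g3 t s + gamma * c1 * c2 * RInt g4 t s)) (fun s => k0 * (g3 s + gamma * c1 * c2 * g4 s))).
  { apply D_scal. apply D_plus. apply RInt_D; auto. apply D_scal. apply RInt_D; auto. }
  assert (Dvv : Dv n 0 T (fun s => mvec n (mtr (E s)) (y s))
     (fun s => vadd (mvec n (mtr (mmul n A (E s))) (y s)) (mvec n (mtr (E s)) (vadd (vopp (mvec n (mtr A) (y s))) (mvec n Qg (m s)))))).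
  { apply D_mvec; auto. intros i j Hi Hj. unfold mtr, E. apply mexp_D; auto. }
  assert (Hb : forall s, 0 <= s <= T -> vn n (vadd (mvec n (mtr (mmul n A (E s))) (y s)) (mvec n (mtr (E s)) (vadd (vopp (mvec n (mtr A) (y s))) (mvec n Qg (m s)))))
     <= k0 * (g3 s + gamma * c1 * c2 * g4 s)).
  { intros s Hs.
    rewrite (vn_ext n _ (mvec n (mtr (E s)) (mvec n Qg (m s)))).
    2: { intros i Hi. rewrite vadd_app, (mvec_ext n _ (mmul n (mtr (E s)) (mtr A)) (y s) (y s) i).
         2: intros; apply mtr_mmul_eq. 2: intros q _; reflexivity.
         rewrite mvec_mmul, mvec_vadd, mvec_vopp. ring. }
    eapply Rle_trans; [apply mvec_bound|]. rewrite fnorm_tr.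
    eapply Rle_trans. apply Rmult_le_compat_l; [apply fnorm_nonneg| apply mvec_bound].
    eapply Rle_trans. apply Rmult_le_compat_l; [apply fnorm_nonneg| apply Rmult_le_compat_l; [apply fnorm_nonneg| apply m_bound; auto]].
    right. unfold k0, g3, g4, E. simpl. field. }
  pose proof (mvi_vec 0 T n _ _ _ _ t T Dvv DB Hb ltac:(lra) ltac:(lra) ltac:(lra)) as Hmv.
  assert (EvT : vn n (vsub (mvec n (mtr (E T)) (y T)) (mvec n (mtr (E t)) (y t))) = vn n (y t)).
  { rewrite <- (vn_opp n (y t)). apply vn_ext. intros i Hi. rewrite vsub_app, vopp_app.
    unfold mvec at 1. rewrite (rsum_0' n). 2: intros k Hk; rewrite HyT; auto; ring.
    rewrite (mvec_ext n (mtr (E t)) idm (y t) (y t) i). rewrite mvec_idm; auto. ring.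
    intros k Hk. unfold mtr, E. rewrite Rminus_diag, mexp_0; auto. unfold idm. destruct (Nat.eqb_spec k i), (Nat.eqb_spec i k); auto; lia.
    intros q _; reflexivity. }
  cbv beta in Hmv. rewrite EvT in Hmv. eapply Rle_trans; [apply Hmv|].
  rewrite !RInt_point. unfold zero; simpl.
  rewrite <- !integral_RInt; auto; try lra.
  specialize (Hc3 t Ht). specialize (Hc4 t Ht). fold g3 in Hc3. fold g4 in Hc4.
  assert (0 <= k0) by (unfold k0; repeat apply Rmult_le_pos; auto).
  assert (0 <= gamma * c1 * c2) by (repeat apply Rmult_le_pos; auto; lra).
  replace (fnorm n n Qg * c2 * fnorm n n S * Y * (c3 + gamma * c1 * c2 * c4)) with (k0 * (c3 + gamma * c1 * c2 * c4)) by (unfold k0; ring).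
  ring_simplify. apply Rmult_le_compat_l with (r := k0) in Hc3; auto.
  assert (gamma * c1 * c2 * integral g4 t T <= gamma * c1 * c2 * c4) by (apply Rmult_le_compat_l; auto).
  assert (k0 * (gamma * c1 * c2 * integral g4 t T) <= k0 * (gamma * c1 * c2 * c4)) by (apply Rmult_le_compat_l; auto).
  nra. Qed.
End WithY.

Lemma vn_cont (z : R -> vec) z' t : Dv n 0 T z z' -> 0 <= t <= T -> contw 0 T (fun s => vn n (z s)) t.
Proof. intros Hz Ht. apply lim0_from0.
  apply (lim0_bound0 _ _ _ _ (fun h => rsum n (fun i => Rabs (z (t + h) i - z t i)))).
  intros h Hh Hab. eapply Rle_trans; [apply vn_sub_diff|]. apply vn_le_sumabs.
  eapply lim0_ext_L; [|apply (lim0_rsum _ _ _ n (fun i h => Rabs (z (t + h) i - z t i)) (fun _ => 0))].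
  apply rsum_0. intros i Hi. apply lim0_abs0. apply (D_cont 0 T (fun s => z s i) _ t (Hz i Hi) Ht). Qed.

Lemma hom_zero : c2 * fnorm n n S * fnorm n n Qg * (c3 + gamma * c1 * c2 * c4) < 1 ->
  forall t, 0 <= t <= T -> veq n (m t) (fun _ => 0) /\ veq n (p t) (fun _ => 0) /\ veq n (y t) (fun _ => 0).
Proof. intros Hsmall.
  destruct (max_on 0 T (fun s => vn n (y s)) ltac:(lra)) as [x0 [Hx0 Hmax]].
  intros; eapply vn_cont; eauto.
  set (Y := vn n (y x0)).
  assert (HY : forall t, 0 <= t <= T -> vn n (y t) <= Y) by (intros; apply Hmax; auto).
  assert (Y0 : Y = 0).
  { pose proof (y_bound Y HY x0 Hx0) as Hb. fold Y in Hb. pose proof (vn_nonneg n (y x0)). fold Y in H.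
    assert (Y * (1 - c2 * fnorm n n S * fnorm n n Qg * (c3 + gamma * c1 * c2 * c4)) <= 0).
    { replace (fnorm n n Qg * c2 * fnorm n n S * Y * (c3 + gamma * c1 * c2 * c4)) with
        (Y * (c2 * fnorm n n S * fnorm n n Qg * (c3 + gamma * c1 * c2 * c4))) in Hb by ring. lra. }
    nra. }
  intros t Ht.
  assert (Hyt : veq n (y t) (fun _ => 0)).
  { intros i Hi. apply (vn_zero n (y t)); auto. pose proof (HY t Ht). pose proof (vn_nonneg n (y t)). lra. }
  assert (Hmt : veq n (m t) (fun _ => 0)).
  { intros i Hi. apply (vn_zero n (m t)); auto. pose proof (m_bound Y HY t Ht). rewrite Y0 in H. pose proof (vn_nonneg n (m t)). nra. }
  assert (Hph : veq n (phi t) (fun _ => 0)).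
  { intros i Hi. apply (vn_zero n (phi t)); auto. pose proof (phi_bound Y HY t Ht). rewrite Y0 in H. pose proof (vn_nonneg n (phi t)). nra. }
  split; auto. split; auto. intros i Hi. specialize (Hph i Hi). unfold phi in Hph. rewrite vadd_app in Hph.
  unfold mvec in Hph. rewrite (rsum_0' n) in Hph. lra. intros k Hk. rewrite Hmt; auto; ring. Qed.
End Hom.
End Core.

From Stdlib Require Import Reals Lra Lia Psatz Arith Classical ClassicalEpsilon.
Open Scope R_scope.

Definition unskip (j0 j : nat) : nat := if Nat.ltb j j0 then j else Nat.pred j.
Lemma unskip_skip j0 j : unskip j0 (skip j0 j) = j.
Proof. unfold unskip, skip. destruct (Nat.ltb_spec j j0).
  destruct (Nat.ltb_spec j j0); lia. destruct (Nat.ltb_spec (S j) j0); lia. Qed.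
Lemma skip_ne j0 j : skip j0 j <> j0.
Proof. unfold skip. destruct (Nat.ltb_spec j j0); lia. Qed.

Lemma lin_dep k (V : nat -> vec) : exists c : nat -> R, (exists j, (j <= k)%nat /\ c j <> 0) /\
  forall i, (i < k)%nat -> rsum (S k) (fun j => c j * V j i) = 0.
Proof. revert V. induction k; intros V.
  - exists (fun _ => 1). split. exists 0%nat. split; [lia|lra]. intros; lia.
  - destruct (classic (exists j0, (j0 <= S k)%nat /\ V j0 k <> 0)) as [[j0 [Hj0 Hv]]|Hno].
    + set (W := fun j i => V (skip j0 j) i - V (skip j0 j) k / V j0 k * V j0 i).
      destruct (IHk W) as [d [[j1 [Hj1 Hd]] Hsum]].
      set (c := fun j => if Nat.eqb j j0 then - rsum (S k) (fun l => d l * V (skip j0 l) k) / V j0 k else d (unskip j0 j)).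
      exists c. split.
      * exists (skip j0 j1). split. unfold skip. destruct (Nat.ltb_spec j1 j0); lia.
        unfold c. destruct (Nat.eqb_spec (skip j0 j1) j0). exfalso; apply (skip_ne j0 j1); auto.
        rewrite unskip_skip. auto.
      * assert (Hc : forall l, c (skip j0 l) = d l).
        { intros l. unfold c. destruct (Nat.eqb_spec (skip j0 l) j0). exfalso; apply (skip_ne j0 l); auto. apply f_equal, unskip_skip. }
        assert (Hc0 : c j0 = - rsum (S k) (fun l => d l * V (skip j0 l) k) / V j0 k).
        { unfold c. rewrite Nat.eqb_refl. auto. }
        intros i Hi. rewrite (rsum_skip (S k) j0) by auto.
        rewrite (rsum_ext (S k) (fun j => c (skip j0 j) * V (skip j0 j) i) (fun j => d j * V (skip j0 j) i)) by (intros; rewrite Hc; auto).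
        rewrite Hc0.
        destruct (Nat.eq_dec i k).
        -- subst. field. auto.
        -- specialize (Hsum i ltac:(lia)). unfold W in Hsum.
           assert (E : rsum (S k) (fun j => d j * (V (skip j0 j) i - V (skip j0 j) k / V j0 k * V j0 i))
              = rsum (S k) (fun j => d j * V (skip j0 j) i) - rsum (S k) (fun l => d l * V (skip j0 l) k) / V j0 k * V j0 i).
           { unfold Rdiv. rewrite <- !rsum_scal_r, <- rsum_minus. apply rsum_ext; intros; ring. }
           rewrite E in Hsum. unfold Rdiv in *. lra.
    + destruct (IHk V) as [d [[j1 [Hj1 Hd]] Hsum]].
      exists (fun j => if Nat.ltb j (S k) then d j else 0). split.
      * exists j1. split. lia. destruct (Nat.ltb_spec j1 (S k)); [auto|lia].
      * intros i Hi. change (rsum (S (S k)) (fun j => (if Nat.ltb j (S k) then d j else 0) * V j i))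
          with (rsum (S k) (fun j => (if Nat.ltb j (S k) then d j else 0) * V j i) + (if Nat.ltb (S k) (S k) then d (S k) else 0) * V (S k) i).
        rewrite Nat.ltb_irrefl. rewrite (rsum_ext (S k) _ (fun j => d j * V j i)).
        2: { intros j Hj. destruct (Nat.ltb_spec j (S k)); [auto|lia]. }
        destruct (Nat.eq_dec i k).
        -- subst. rewrite rsum_0'. ring. intros j Hj. destruct (Req_dec (V j k) 0). rewrite H; ring.
           exfalso. apply Hno. exists j. split; [lia|auto].
        -- rewrite Hsum by lia. ring.
Qed.

Lemma inj_surj k (L : mat) : (forall u : vec, (forall a, (a < k)%nat -> rsum k (fun b => L a b * u b) = 0) -> forall b, (b < k)%nat -> u b = 0) ->
  forall c : vec, exists u : vec, forall a, (a < k)%nat -> rsum k (fun b => L a b * u b) = c a.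
Proof. intros Hinj c.
  destruct (lin_dep k (fun j a => if Nat.ltb j k then L a j else c a)) as [d [[j1 [Hj1 Hd]] Hsum]].
  assert (Hdk : d k <> 0).
  { intros Hk. assert (Hu : forall b, (b < k)%nat -> d b = 0).
    { apply Hinj. intros a Ha. specialize (Hsum a Ha). simpl in Hsum. rewrite Hk in Hsum.
      rewrite <- Hsum. rewrite Rmult_0_l, Rplus_0_r. apply rsum_ext. intros b Hb.
      destruct (Nat.ltb_spec b k); [ring|lia]. }
    destruct (Nat.eq_dec j1 k). subst; auto. apply Hd. apply Hu. lia. }
  exists (fun b => - d b / d k). intros a Ha. specialize (Hsum a Ha). simpl in Hsum.
  rewrite Nat.ltb_irrefl in Hsum.
  rewrite (rsum_ext k _ (fun b => d b * L a b)) in Hsum. 2: { intros b Hb. destruct (Nat.ltb_spec b k); [auto|lia]. }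
  unfold Rdiv. rewrite (rsum_ext k _ (fun b => (d b * L a b) * (- / d k))) by (intros; ring).
  rewrite rsum_scal_r. replace (rsum k (fun b => d b * L a b)) with (- (d k * c a)) by lra. field. auto. Qed.

Definition bidx (n i : nat) : nat := if Nat.ltb i n then 0 else if Nat.ltb i (n + n) then 1 else if Nat.ltb i (n + (n + n)) then 2 else 3.
Definition boff (n i : nat) : nat := if Nat.ltb i n then i else if Nat.ltb i (n + n) then (i - n)%nat else if Nat.ltb i (n + (n + n)) then (i - (n + n))%nat else 0.

Lemma bi0 n k : (k < n)%nat -> bidx n k = 0%nat /\ boff n k = k.
Proof. intros. unfold bidx, boff. destruct (Nat.ltb_spec k n); [auto|lia]. Qed.
Lemma bi1 n k : (k < n)%nat -> bidx n (n + k) = 1%nat /\ boff n (n + k) = k.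
Proof. intros. unfold bidx, boff. destruct (Nat.ltb_spec (n + k) n); [lia|]. destruct (Nat.ltb_spec (n + k) (n + n)); [|lia]. split; lia. Qed.
Lemma bi2 n k : (k < n)%nat -> bidx n (n + (n + k)) = 2%nat /\ boff n (n + (n + k)) = k.
Proof. intros. unfold bidx, boff. destruct (Nat.ltb_spec (n + (n + k)) n); [lia|]. destruct (Nat.ltb_spec (n + (n + k)) (n + n)); [lia|].
  destruct (Nat.ltb_spec (n + (n + k)) (n + (n + n))); [|lia]. split; lia. Qed.
Lemma bi3 n : bidx n (n + (n + n)) = 3%nat.
Proof. unfold bidx. destruct (Nat.ltb_spec (n + (n + n)) n); [lia|]. destruct (Nat.ltb_spec (n + (n + n)) (n + n)); [lia|].
  destruct (Nat.ltb_spec (n + (n + n)) (n + (n + n))); [lia|]. auto. Qed.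

Definition N3 (n : nat) : nat := (n + (n + (n + 1)))%nat.

Lemma rsum_N3 n f : rsum (N3 n) f = rsum n f + rsum n (fun l => f (n + l)%nat) + rsum n (fun l => f (n + (n + l))%nat) + f (n + (n + n))%nat.
Proof. unfold N3. rewrite rsum_split, rsum_split. rewrite Nat.add_1_r. simpl. lra. Qed.

Section Blk.
Variables (n : nat) (T gamma : R) (AG S Qh Qg A Pm Q : mat) (eta : vec).
Hypothesis HT : 0 < T.

Definition blockf (bi bj i j : nat) : R :=
  match bi, bj with
  | 0, 0 => AG i j | 0, 1 => gamma * idm i j | 0, 2 => S i j
  | 1, 0 => - Qh i j | 1, 1 => - AG j i | 1, 3 => mvec n Pm eta i
  | 2, 0 => Qg i j | 2, 2 => - A j i | 2, 3 => - mvec n Q eta i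
  | _, _ => 0 end.

Definition Mb (i j : nat) : R := blockf (bidx n i) (bidx n j) (boff n i) (boff n j).

Ltac bsimp := repeat match goal with
  | |- context [bidx n (n + (n + n))] => rewrite (bi3 n)
  | H : (?k < n)%nat |- context [bidx n (n + (n + ?k))] => rewrite (proj1 (bi2 n k H)), (proj2 (bi2 n k H))
  | H : (?k < n)%nat |- context [bidx n (n + ?k)] => rewrite (proj1 (bi1 n k H)), (proj2 (bi1 n k H))
  | H : (?k < n)%nat |- context [bidx n ?k] => rewrite (proj1 (bi0 n k H)), (proj2 (bi0 n k H))
  end.

Lemma row_m z k : (k < n)%nat -> mvec (N3 n) Mb z k = mvec n AG z k + mvec n S (fun l => z (n + (n + l))%nat) k + gamma * z (n + k)%nat.
Proof. intros Hk. unfold mvec. rewrite rsum_N3.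
  rewrite (rsum_ext n (fun l => Mb k l * z l) (fun l => AG k l * z l)) by (intros l Hl; unfold Mb; bsimp; reflexivity).
  rewrite (rsum_ext n (fun l => Mb k (n + l)%nat * z (n + l)%nat) (fun l => gamma * (idm k l * z (n + l)%nat))) by (intros l Hl; unfold Mb; bsimp; simpl; ring).
  rewrite (rsum_ext n (fun l => Mb k (n + (n + l))%nat * z (n + (n + l))%nat) (fun l => S k l * z (n + (n + l))%nat)) by (intros l Hl; unfold Mb; bsimp; reflexivity).
  unfold Mb at 1. bsimp. simpl. rewrite rsum_scal, rsum_delta; auto. ring. Qed.

Lemma row_p z k : (k < n)%nat -> mvec (N3 n) Mb z (n + k)%nat = - mvec n Qh z k - mvec n (mtr AG) (fun l => z (n + l)%nat) k + mvec n Pm eta k * z (n + (n + n))%nat.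
Proof. intros Hk. unfold mvec. rewrite rsum_N3.
  rewrite (rsum_ext n (fun l => Mb (n + k)%nat l * z l) (fun l => - (Qh k l * z l))) by (intros l Hl; unfold Mb; bsimp; simpl; ring).
  rewrite (rsum_ext n (fun l => Mb (n + k)%nat (n + l)%nat * z (n + l)%nat) (fun l => - (mtr AG k l * z (n + l)%nat))) by (intros l Hl; unfold Mb; bsimp; simpl; unfold mtr; ring).
  rewrite (rsum_ext n (fun l => Mb (n + k)%nat (n + (n + l))%nat * z (n + (n + l))%nat) (fun _ => 0)) by (intros l Hl; unfold Mb; bsimp; simpl; ring).
  unfold Mb at 1. bsimp. simpl. rewrite !rsum_opp, rsum_0. unfold mvec. ring. Qed.

Lemma row_y z k : (k < n)%nat -> mvec (N3 n) Mb z (n + (n + k))%nat = mvec n Qg z k - mvec n (mtr A) (fun l => z (n + (n + l))%nat) k - mvec n Q eta k * z (n + (n + n))%nat.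
Proof. intros Hk. unfold mvec. rewrite rsum_N3.
  rewrite (rsum_ext n (fun l => Mb (n + (n + k))%nat l * z l) (fun l => Qg k l * z l)) by (intros l Hl; unfold Mb; bsimp; simpl; ring).
  rewrite (rsum_ext n (fun l => Mb (n + (n + k))%nat (n + l)%nat * z (n + l)%nat) (fun _ => 0)) by (intros l Hl; unfold Mb; bsimp; simpl; ring).
  rewrite (rsum_ext n (fun l => Mb (n + (n + k))%nat (n + (n + l))%nat * z (n + (n + l))%nat) (fun l => - (mtr A k l * z (n + (n + l))%nat))) by (intros l Hl; unfold Mb; bsimp; simpl; unfold mtr; ring).
  unfold Mb at 1. bsimp. simpl. rewrite !rsum_opp, rsum_0. unfold mvec. ring. Qed.

Lemma row_s z : mvec (N3 n) Mb z (n + (n + n))%nat = 0.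
Proof. unfold mvec. apply rsum_0'. intros. unfold Mb. rewrite bi3. simpl. ring. Qed.

End Blk.

Lemma const_D0 a b f : has_deriv_on a b f (fun _ => 0) -> forall x, a <= x <= b -> f x = f a.
Proof. intros H x Hx. assert (f x <= f a). apply (mono a b f (fun _ => 0)); auto; intros; lra.
  assert (- f x <= - f a). apply (mono a b (fun t => - f t) (fun _ => - 0)); try (intros; lra). apply D_opp; auto. lra. Qed.

Section Sol.
Variables (n : nat) (T gamma : R) (AG S Qh Qg A Pm Q : mat) (eta : vec).
Hypothesis HT : 0 < T.
Let MB := Mb n gamma AG S Qh Qg A Pm Q eta.

Definition Zf (z0 : vec) (t : R) : vec := mvec (N3 n) (mexp (N3 n) MB t) z0.

Lemma Z_D z0 : Dv (N3 n) 0 T (Zf z0) (fun t => mvec (N3 n) MB (Zf z0 t)).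
Proof. unfold Zf. eapply Dv_ext; [|apply (D_mvec_const 0 T (N3 n) (fun t => mexp (N3 n) MB t) (fun t => mmul (N3 n) MB (mexp (N3 n) MB t)) z0)].
  intros t Ht i Hi. apply mvec_mmul.
  intros i j Hi Hj. pose proof (mexp_D 0 T (N3 n) MB i j 0 Hi) as D.
  apply (D_ext _ _ _ (fun s => mmul (N3 n) MB (mexp (N3 n) MB (s - 0)) i j)). intros; rewrite Rminus_0_r; auto.
  apply (D_ext_f _ _ (fun s => mexp (N3 n) MB (s - 0) i j)). intros; rewrite Rminus_0_r; auto. auto. Qed.

Lemma Z_0 z0 i : (i < N3 n)%nat -> Zf z0 0 i = z0 i.
Proof. intros Hi. unfold Zf, mvec. rewrite (rsum_ext _ _ (fun k => idm i k * z0 k)). apply rsum_delta; auto.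
  intros k Hk. rewrite mexp_0; auto. Qed.

Lemma N3_lt_s : (n + (n + n) < N3 n)%nat.
Proof. unfold N3. lia. Qed.

Lemma Z_s z0 t : 0 <= t <= T -> Zf z0 t (n + (n + n))%nat = z0 (n + (n + n))%nat.
Proof. intros Ht. rewrite <- (Z_0 z0 _ N3_lt_s). apply (const_D0 0 T (fun t => Zf z0 t (n + (n + n))%nat)); auto.
  apply (D_ext _ _ _ (fun t => mvec (N3 n) MB (Zf z0 t) (n + (n + n))%nat)). intros; apply row_s.
  apply Z_D. apply N3_lt_s. Qed.

Definition mZ z0 t : vec := fun k => Zf z0 t k.
Definition pZ z0 t : vec := fun k => Zf z0 t (n + k)%nat.
Definition yZ z0 t : vec := fun k => Zf z0 t (n + (n + k))%nat.

Lemma Z_sys z0 :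
  Dv n 0 T (mZ z0) (fun t => vadd (vadd (mvec n AG (mZ z0 t)) (mvec n S (yZ z0 t))) (vscal gamma (pZ z0 t))) /\
  Dv n 0 T (pZ z0) (fun t => vadd (vsub (vopp (mvec n (mtr AG) (pZ z0 t))) (mvec n Qh (mZ z0 t))) (vscal (z0 (n + (n + n))%nat) (mvec n Pm eta))) /\
  Dv n 0 T (yZ z0) (fun t => vsub (vadd (vopp (mvec n (mtr A) (yZ z0 t))) (mvec n Qg (mZ z0 t))) (vscal (z0 (n + (n + n))%nat) (mvec n Q eta))).
Proof. pose proof (Z_D z0) as DZ. split; [|split].
  - intros k Hk. apply (D_ext _ _ _ (fun t => mvec (N3 n) MB (Zf z0 t) k)).
    intros t Ht. cbv beta. unfold MB. rewrite row_m; auto.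
    apply DZ. unfold N3; lia.
  - intros k Hk. apply (D_ext _ _ _ (fun t => mvec (N3 n) MB (Zf z0 t) (n + k)%nat)).
    intros t Ht. cbv beta. unfold MB. rewrite row_p; auto. fold MB. rewrite (Z_s z0 t Ht). unfold vadd, vsub, vopp, vscal, mZ, pZ. change (fun k0 : nat => Zf z0 t k0) with (Zf z0 t). ring.
    apply (DZ (n + k)%nat). unfold N3; lia.
  - intros k Hk. apply (D_ext _ _ _ (fun t => mvec (N3 n) MB (Zf z0 t) (n + (n + k))%nat)).
    intros t Ht. cbv beta. unfold MB. rewrite row_y; auto. fold MB. rewrite (Z_s z0 t Ht). unfold vadd, vsub, vopp, vscal, mZ, yZ. change (fun k0 : nat => Zf z0 t k0) with (Zf z0 t). ring.
    apply (DZ (n + (n + k))%nat). unfold N3; lia.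
Qed.
End Sol.

From Stdlib Require Import Reals Lra Lia Psatz Arith Classical ClassicalEpsilon FunctionalExtensionality.
Open Scope R_scope.

Definition zu (n : nat) (u : vec) : vec := fun j => if Nat.ltb j n then 0 else if Nat.ltb j (n + (n + n)) then u (j - n)%nat else 0.
Definition zb (n : nat) (m0 : vec) : vec := fun j => if Nat.ltb j n then m0 j else if Nat.ltb j (n + (n + n)) then 0 else 1.
Definition zf (n : nat) (m0 u : vec) : vec := fun j => if Nat.ltb j n then m0 j else if Nat.ltb j (n + (n + n)) then u (j - n)%nat else 1.

Lemma zu_1 n u l : (l < n)%nat -> zu n u (n + l)%nat = u l.
Proof. intros. unfold zu. destruct (Nat.ltb_spec (n + l) n); [lia|]. destruct (Nat.ltb_spec (n + l) (n + (n + n))); [|lia]. f_equal; lia. Qed.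
Lemma zu_2 n u l : (l < n)%nat -> zu n u (n + (n + l))%nat = u (n + l)%nat.
Proof. intros. unfold zu. destruct (Nat.ltb_spec (n + (n + l)) n); [lia|]. destruct (Nat.ltb_spec (n + (n + l)) (n + (n + n))); [|lia]. f_equal; lia. Qed.
Lemma zu_0 n u l : (l < n)%nat -> zu n u l = 0.
Proof. intros. unfold zu. destruct (Nat.ltb_spec l n); [auto|lia]. Qed.
Lemma zu_3 n u : zu n u (n + (n + n))%nat = 0.
Proof. unfold zu. destruct (Nat.ltb_spec (n + (n + n)) n); [lia|]. destruct (Nat.ltb_spec (n + (n + n)) (n + (n + n))); [lia|]. auto. Qed.

Lemma mvec_zu n (E : mat) u i : mvec (N3 n) E (zu n u) i = rsum (n + n) (fun b => E i (n + b)%nat * u b).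
Proof. unfold mvec. rewrite rsum_N3, rsum_split. rewrite zu_3.
  rewrite (rsum_0' n (fun l => E i l * zu n u l)) by (intros; rewrite zu_0; auto; ring).
  rewrite (rsum_ext n (fun l => E i (n + l)%nat * zu n u (n + l)%nat) (fun l => E i (n + l)%nat * u l)) by (intros; rewrite zu_1; auto).
  rewrite (rsum_ext n (fun l => E i (n + (n + l))%nat * zu n u (n + (n + l))%nat) (fun l => E i (n + (n + l))%nat * u (n + l)%nat)) by (intros; rewrite zu_2; auto).
  ring_simplify. reflexivity. Qed.

Lemma zf_split n m0 u : zf n m0 u = vadd (zb n m0) (zu n u).
Proof. apply functional_extensionality. intros j. unfold zf, zb, zu, vadd.
  destruct (Nat.ltb j n); [ring|]. destruct (Nat.ltb j (n + (n + n))); ring. Qed.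

Lemma zf_3 n m0 u : zf n m0 u (n + (n + n))%nat = 1.
Proof. unfold zf. destruct (Nat.ltb_spec (n + (n + n)) n); [lia|]. destruct (Nat.ltb_spec (n + (n + n)) (n + (n + n))); [lia|]. auto. Qed.
Lemma zf_0 n m0 u k : (k < n)%nat -> zf n m0 u k = m0 k.
Proof. intros. unfold zf. destruct (Nat.ltb_spec k n); [auto|lia]. Qed.

Lemma Qh_sym n Gam Q : (forall i j, (i < n)%nat -> (j < n)%nat -> Q i j = Q j i) ->
  forall i j, (i < n)%nat -> (j < n)%nat ->
  mmul n (mmul n (mtr (msub idm Gam)) Q) (msub idm Gam) i j = mmul n (mmul n (mtr (msub idm Gam)) Q) (msub idm Gam) j i.
Proof. intros HQ i j Hi Hj. unfold mmul, mtr.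
  transitivity (rsum n (fun k => rsum n (fun l => msub idm Gam l i * Q l k * msub idm Gam k j))).
  apply rsum_ext; intros. rewrite <- rsum_scal_r. auto.
  rewrite rsum_swap. symmetry.
  transitivity (rsum n (fun k => rsum n (fun l => msub idm Gam l j * Q l k * msub idm Gam k i))).
  apply rsum_ext; intros. rewrite <- rsum_scal_r. auto.
  apply rsum_ext; intros k Hk. apply rsum_ext; intros l Hl. rewrite HQ; auto. ring. Qed.

Lemma Kder_tr n AG Qh gamma K t i j : (forall i j, (i < n)%nat -> (j < n)%nat -> Qh i j = Qh j i) -> (i < n)%nat -> (j < n)%nat ->
  Kder n AG Qh gamma K t j i = Kder n AG Qh gamma (fun t => mtr (K t)) t i j.
Proof. intros HQ Hi Hj. unfold Kder, madd, mopp, mscal, mmul, mtr.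
  rewrite HQ by auto.
  replace (rsum n (fun k => K t j k * AG k i)) with (rsum n (fun k => AG k i * K t j k)) by (apply rsum_ext; intros; ring).
  replace (rsum n (fun k => AG k j * K t k i)) with (rsum n (fun k => K t k i * AG k j)) by (apply rsum_ext; intros; ring).
  replace (rsum n (fun k => K t j k * K t k i)) with (rsum n (fun k => K t k i * K t j k)) by (apply rsum_ext; intros; ring).
  ring. Qed.

Ltac vsimp := repeat progress (rewrite ?vadd_app, ?vsub_app, ?vscal_app, ?vopp_app, ?mvec_vsub, ?mvec_vadd, ?mvec_vopp, ?mvec_vscal).

Lemma alg_m n AG S gamma m m' p p' y y' i :
  vsub (vadd (vadd (mvec n AG m) (mvec n S y)) (vscal gamma p)) (vadd (vadd (mvec n AG m') (mvec n S y')) (vscal gamma p')) i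
  = vadd (vadd (mvec n AG (vsub m m')) (mvec n S (vsub y y'))) (vscal gamma (vsub p p')) i.
Proof. vsimp. ring. Qed.

Lemma mvec_IG n P Gam m i : mvec n P (mvec n (msub idm Gam) m) i = mvec n P m i - mvec n P (mvec n Gam m) i.
Proof. rewrite <- mvec_vsub. apply mvec_ext. intros; reflexivity. intros k Hk. rewrite mvec_msub, mvec_idm by auto. reflexivity. Qed.

Lemma alg_p n AG Pm Gam eta m m' p p' i :
  vsub (vsub (vopp (mvec n (mtr AG) p)) (mvec n Pm (vsub m (vadd (mvec n Gam m) eta))))
       (vsub (vopp (mvec n (mtr AG) p')) (mvec n Pm (vsub m' (vadd (mvec n Gam m') eta)))) i
  = vsub (vopp (mvec n (mtr AG) (vsub p p'))) (mvec n (mmul n Pm (msub idm Gam)) (vsub m m')) i.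
Proof. vsimp. rewrite !mvec_mmul, !mvec_IG. vsimp. ring. Qed.

Lemma alg_y n A Q Gam eta m m' y y' i :
  vsub (vadd (vopp (mvec n (mtr A) y)) (mvec n Q (vsub m (vadd (mvec n Gam m) eta))))
       (vadd (vopp (mvec n (mtr A) y')) (mvec n Q (vsub m' (vadd (mvec n Gam m') eta)))) i
  = vadd (vopp (mvec n (mtr A) (vsub y y'))) (mvec n (mmul n Q (msub idm Gam)) (vsub m m')) i.
Proof. vsimp. rewrite !mvec_mmul, !mvec_IG. vsimp. ring. Qed.

Lemma alg_p1 n AG Pm Gam eta m p i :
  vadd (vsub (vopp (mvec n (mtr AG) p)) (mvec n (mmul n Pm (msub idm Gam)) m)) (vscal 1 (mvec n Pm eta)) i
  = vsub (vopp (mvec n (mtr AG) p)) (mvec n Pm (vsub m (vadd (mvec n Gam m) eta))) i.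
Proof. vsimp. rewrite !mvec_mmul, !mvec_IG. vsimp. ring. Qed.

Lemma alg_y1 n A Q Gam eta m y i :
  vsub (vadd (vopp (mvec n (mtr A) y)) (mvec n (mmul n Q (msub idm Gam)) m)) (vscal 1 (mvec n Q eta)) i
  = vadd (vopp (mvec n (mtr A) y)) (mvec n Q (vsub m (vadd (mvec n Gam m) eta))) i.
Proof. vsimp. rewrite !mvec_mmul, !mvec_IG. vsimp. ring. Qed.

Lemma alg_p0 n AG Qh p m (w : vec) i :
  vadd (vsub (vopp (mvec n (mtr AG) p)) (mvec n Qh m)) (vscal 0 w) i = vsub (vopp (mvec n (mtr AG) p)) (mvec n Qh m) i.
Proof. vsimp. ring. Qed.

Lemma alg_y0 n A Qg y m (w : vec) i :
  vsub (vadd (vopp (mvec n (mtr A) y)) (mvec n Qg m)) (vscal 0 w) i = vadd (vopp (mvec n (mtr A) y)) (mvec n Qg m) i.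
Proof. vsimp. ring. Qed.
Lemma Hzero_vec n H x i : meq n n H (fun _ _ => 0) -> (i < n)%nat -> mvec n H x i = 0.
Proof. intros H0 Hi. unfold mvec. apply rsum_0'. intros. rewrite H0; auto; ring. Qed.

From Stdlib Require Import Reals Lra Lia Psatz Arith Classical ClassicalEpsilon FunctionalExtensionality.
Open Scope R_scope.

Theorem theorem15 (n n1 : nat) (T gamma : R) (A G Gam B Q H R0 : mat) (eta m0 : vec)
  (Hn : (1 <= n)%nat) (Hn1 : (1 <= n1)%nat) (HT : 0 < T) (Hgamma : 0 < gamma)
  (HQ : psd n Q) (HH : psd n H) (HR : pd n1 R0)
  (H0 : meq n n H (fun _ _ => 0))
  (K : R -> mat)
  (HK : riccati_sol n T gamma A G Gam Q H K)
  (HKuniq : forall K', riccati_sol n T gamma A G Gam Q H K' ->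
             forall t, 0 <= t <= T -> meq n n (K' t) (K t))
  (Phi : R -> R -> mat)
  (HPhi : fundamental_sol n T gamma A G K Phi)
  (c1 c2 c3 c4 : R)
  (Hc1 : is_max_on (fun t => 0 <= t <= T) (fun t => fnorm n n (K t)) c1)
  (Hc2 : is_max_on (fun ts : R * R => 0 <= fst ts <= T /\ 0 <= snd ts <= T)
           (fun ts => fnorm n n (Phi (fst ts) (snd ts))) c2)
  (Hc3 : is_max_on (fun t => 0 <= t <= T)
           (fun t => integral (fun s => fnorm n n (mexp n A (s - t)) * s) t T) c3)
  (Hc4 : is_max_on (fun t => 0 <= t <= T)
           (fun t => integral (fun s => fnorm n n (mexp n A (s - t)) * (T * s - s ^ 2 / 2)) t T) c4)
  (Hsmall : c2 * fnorm n n (mmul n1 (mmul n1 B (minv n1 R0)) (mtr B))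
               * fnorm n n (mmul n Q (msub idm Gam))
               * (c3 + gamma * c1 * c2 * c4) < 1) :
  (exists m p y : R -> vec, MF_sol n n1 T gamma A G Gam B Q H R0 eta m0 m p y) /\
  (forall m p y m' p' y',
     MF_sol n n1 T gamma A G Gam B Q H R0 eta m0 m p y ->
     MF_sol n n1 T gamma A G Gam B Q H R0 eta m0 m' p' y' ->
     forall t, 0 <= t <= T ->
       veq n (m t) (m' t) /\ veq n (p t) (p' t) /\ veq n (y t) (y' t)).
Proof.
  set (AG := madd A G).
  set (S := mmul n1 (mmul n1 B (minv n1 R0)) (mtr B)).
  set (Pm := mmul n (mtr (msub idm Gam)) Q).
  set (Qh := mmul n Pm (msub idm Gam)).
  set (Qg := mmul n Q (msub idm Gam)).
  destruct HK as [HKd HKT0].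
  assert (HKd' : forall i j, (i < n)%nat -> (j < n)%nat -> has_deriv_on 0 T (fun t => K t i j) (fun t => Kder n AG Qh gamma K t i j)).
  { intros i j Hi Hj. exact (HKd i j Hi Hj). }
  assert (HKT : forall i j, (i < n)%nat -> (j < n)%nat -> K T i j = 0).
  { intros i j Hi Hj. rewrite HKT0 by auto. unfold mopp. rewrite H0 by auto. ring. }
  assert (HQs : forall i j, (i < n)%nat -> (j < n)%nat -> Q i j = Q j i).
  { destruct HQ as [HQs _]. intros i j Hi Hj. apply HQs; auto. }
  assert (HQh : forall i j, (i < n)%nat -> (j < n)%nat -> Qh i j = Qh j i).
  { intros i j Hi Hj. apply Qh_sym; auto. }
  assert (HKsym : forall t, 0 <= t <= T -> forall i j, (i < n)%nat -> (j < n)%nat -> K t j i = K t i j).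
  { intros t Ht i j Hi Hj.
    assert (R1 : riccati_sol n T gamma A G Gam Q H (fun t => mtr (K t))).
    { split.
      - intros i' j' Hi' Hj'. apply (D_ext _ _ _ (fun t => Kder n AG Qh gamma K t j' i')).
        intros tau _. apply (Kder_tr n AG Qh gamma K tau i' j'); auto.
        exact (HKd j' i' Hj' Hi').
      - intros i' j' Hi' Hj'. unfold mtr. rewrite HKT0 by auto. unfold mopp. rewrite !H0 by auto. ring. }
    specialize (HKuniq _ R1 t Ht i j Hi Hj). unfold mtr in HKuniq. auto. }
  assert (HPhi0 : forall s, 0 <= s <= T -> meq n n (Phi s s) idm) by (intros; apply HPhi; auto).
  assert (HPhid : forall s, 0 <= s <= T -> forall i j, (i < n)%nat -> (j < n)%nat ->
    has_deriv_on 0 T (fun t => Phi t s i j) (fun t => mmul n (Mt n AG gamma K t) (Phi t s) i j)).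
  { intros s Hs i j Hi Hj. exact (proj2 (HPhi s Hs) i j Hi Hj). }
  destruct Hc1 as [_ Hc1']. destruct Hc2 as [_ Hc2']. destruct Hc3 as [_ Hc3']. destruct Hc4 as [_ Hc4'].
  assert (Hc1b : forall t, 0 <= t <= T -> fnorm n n (K t) <= c1) by (intros; apply Hc1'; auto).
  assert (Hc2b : forall t s, 0 <= t <= T -> 0 <= s <= T -> fnorm n n (Phi t s) <= c2).
  { intros t s Ht Hs. apply (Hc2' (t, s)). simpl; auto. }
  pose proof (hom_zero n T gamma c1 c2 AG A S Qg Qh K Phi HT Hgamma HKd' HKT HKsym HPhi0 HPhid Hc1b Hc2b) as HZ.
  split.
  -
    set (MB := Mb n gamma AG S Qh Qg A Pm Q eta).
    set (L := fun a b => mexp (N3 n) MB T (n + a)%nat (n + b)%nat).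
    assert (Hinj : forall u : vec, (forall a, (a < n + n)%nat -> rsum (n + n) (fun b => L a b * u b) = 0) -> forall b, (b < n + n)%nat -> u b = 0).
    { intros u Hu.
      destruct (Z_sys n T gamma AG S Qh Qg A Pm Q eta (zu n u)) as [Dm [Dp Dy]].
      rewrite zu_3 in Dp, Dy.
      assert (Zv : forall a, (a < n + n)%nat -> Zf n gamma AG S Qh Qg A Pm Q eta (zu n u) T (n + a)%nat = rsum (n + n) (fun b => L a b * u b)).
      { intros a Ha. unfold Zf. apply mvec_zu. }
      destruct (HZ (mZ n gamma AG S Qh Qg A Pm Q eta (zu n u)) (pZ n gamma AG S Qh Qg A Pm Q eta (zu n u)) (yZ n gamma AG S Qh Qg A Pm Q eta (zu n u))
        Dm) with (c3 := c3) (c4 := c4) (t := 0) as [_ [Ep Ey]].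
      + eapply Dv_ext; [|apply Dp]. intros tau _ i Hi. apply alg_p0.
      + eapply Dv_ext; [|apply Dy]. intros tau _ i Hi. apply alg_y0.
      + intros k Hk. unfold mZ. rewrite Z_0 by (unfold N3; lia). apply zu_0; auto.
      + intros k Hk. unfold pZ. rewrite Zv by lia. apply Hu. lia.
      + intros k Hk. unfold yZ. rewrite (Zv (n + k)%nat) by lia. apply Hu. lia.
      + intros t Ht; apply Hc3'; auto.
      + intros t Ht; apply Hc4'; auto.
      + exact Hsmall.
      + lra.
      + intros b Hb. destruct (Nat.ltb_spec b n) as [Hbn|Hbn].
        * specialize (Ep b Hbn). unfold pZ in Ep. rewrite Z_0 in Ep by (unfold N3; lia). rewrite zu_1 in Ep; auto.
        * specialize (Ey (b - n)%nat ltac:(lia)). unfold yZ in Ey. rewrite Z_0 in Ey by (unfold N3; lia). rewrite zu_2 in Ey by lia.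
          replace (n + (b - n))%nat with b in Ey by lia. auto. }
    destruct (inj_surj (n + n) L Hinj (fun a => - Zf n gamma AG S Qh Qg A Pm Q eta (zb n m0) T (n + a)%nat)) as [u Hu].
    set (z0 := zf n m0 u).
    assert (Zsplit : forall i, Zf n gamma AG S Qh Qg A Pm Q eta z0 T i = Zf n gamma AG S Qh Qg A Pm Q eta (zb n m0) T i + rsum (n + n) (fun b => mexp (N3 n) MB T i (n + b)%nat * u b)).
    { intros i. unfold Zf, z0. rewrite zf_split, mvec_vadd, mvec_zu. auto. }
    destruct (Z_sys n T gamma AG S Qh Qg A Pm Q eta z0) as [Dm [Dp Dy]].
    unfold z0 in Dp, Dy. rewrite zf_3 in Dp, Dy. fold z0 in Dp, Dy.
    exists (mZ n gamma AG S Qh Qg A Pm Q eta z0), (pZ n gamma AG S Qh Qg A Pm Q eta z0), (yZ n gamma AG S Qh Qg A Pm Q eta z0).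
    split; [|split; [|split; [|split; [|split]]]].
    + exact Dm.
    + intros i Hi. eapply D_ext; [|apply (Dp i Hi)]. intros tau _. cbv beta. apply alg_p1.
    + intros i Hi. eapply D_ext; [|apply (Dy i Hi)]. intros tau _. cbv beta. apply alg_y1.
    + intros k Hk. unfold mZ. rewrite Z_0 by (unfold N3; lia). unfold z0. apply zf_0; auto.
    + intros k Hk. rewrite Hzero_vec; auto. unfold pZ. rewrite Zsplit. specialize (Hu k ltac:(lia)). unfold L in Hu. rewrite Hu. ring.
    + intros k Hk. unfold vopp. rewrite Hzero_vec; auto. unfold yZ. rewrite Zsplit. specialize (Hu (n + k)%nat ltac:(lia)). unfold L in Hu. rewrite Hu. ring.
  -
    intros m p y m' p' y' Hs1 Hs2 t Ht.
    destruct Hs1 as [Dm [Dp [Dy [Hm0 [HpT HyT]]]]]. destruct Hs2 as [Dm' [Dp' [Dy' [Hm0' [HpT' HyT']]]]].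
    destruct (HZ (fun t => vsub (m t) (m' t)) (fun t => vsub (p t) (p' t)) (fun t => vsub (y t) (y' t))) with (c3 := c3) (c4 := c4) (t := t) as [E1 [E2 E3]].
    + eapply Dv_ext; [|apply Dv_sub; [exact Dm| exact Dm']]. intros tau _ i Hi. apply alg_m.
    + eapply Dv_ext; [|apply Dv_sub; [exact Dp| exact Dp']]. intros tau _ i Hi. apply alg_p.
    + eapply Dv_ext; [|apply Dv_sub; [exact Dy| exact Dy']]. intros tau _ i Hi. apply alg_y.
    + intros i Hi. unfold vsub. rewrite Hm0, Hm0' by auto. ring.
    + intros i Hi. unfold vsub. rewrite HpT, HpT' by auto. rewrite !Hzero_vec; auto. ring.
    + intros i Hi. unfold vsub. rewrite HyT, HyT' by auto. unfold vopp. rewrite !Hzero_vec; auto. ring.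
    + intros s Hs; apply Hc3'; auto.
    + intros s Hs; apply Hc4'; auto.
    + exact Hsmall.
    + auto.
    + split; [|split]; intros i Hi; [specialize (E1 i Hi)| specialize (E2 i Hi)| specialize (E3 i Hi)]; unfold vsub in *; lra.
Qed.
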